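(* Let $q\ge 2$ be an integer and $s\in(0,2)$, and let $P(x,t)=|\Psi(x,t)|^2$ be the probability density of the Weierstrass-like wave function $\Psi$ defined in the context. Then for every fixed $t\in\mathbb R$ the graph of $x\mapsto P(x,t)$ on $[0,\pi]$ has box-counting dimension $D_x=\max\{s,1\}$. In particular this dimension is the same at $t=0$ and at every later time.
   Context: For an integer $q\ge2$ and $s\in(0,2)$ define, for $x\in[0,\pi]$ and $t\in\mathbb R$, $$\Psi(x,t)=N\sum_{n=0}^{\infty} q^{n(s-2)}\sin(q^n x)\,e^{-i q^{2n} t},\qquad N=\sqrt{\tfrac{2}{\pi}\big(1-q^{2(s-2)}\big)},$$ a uniformly convergent series. Let $P(x,t)=|\Psi(x,t)|^2$. For a bounded set $A\subset\mathbb R^d$ let $N(\delta)$ be the number of cubes $[m_1\delta,(m_1+1)\delta]\times\dots\times[m_d\delta,(m_d+1)\delta]$, $m_i\in\mathbb Z$, meeting $A$. The upper and lower box-counting dimensions are $\limsup_{\delta\to0}$ and $\liminf_{\delta\to0}$ of $\ln N(\delta)/\ln(1/\delta)$. The box-counting dimension $\dim_B A$ exists when these two coincide, and is then their common value. The graph of a function $f$ on a set $U$ is $\{(u,f(u)):u\in U\}$. *)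

(* Defs.v *)
From Stdlib Require Import Reals ZArith List.
From Coquelicot Require Import Coquelicot.
Open Scope R_scope.

Definition coef (q : nat) (s : R) (n : nat) : R :=
  Rpower (INR q) (INR n * (s - 2)).

Definition Nconst (q : nat) (s : R) : R :=
  sqrt (2 / PI * (1 - Rpower (INR q) (2 * (s - 2)))).

(* Psi(x,t) = N sum q^{n(s-2)} sin(q^n x) e^{-i q^{2n} t}; real and imaginary parts. *)
Definition RePsi (q : nat) (s x t : R) : R :=
  Nconst q s * Series (fun n => coef q s n * sin (INR q ^ n * x) * cos (INR q ^ (2 * n) * t)).

Definition ImPsi (q : nat) (s x t : R) : R :=
  - (Nconst q s * Series (fun n => coef q s n * sin (INR q ^ n * x) * sin (INR q ^ (2 * n) * t))).

Definition Pdens (q : nat) (s x t : R) : R := RePsi q s x t ^ 2 + ImPsi q s x t ^ 2.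

Definition graphP (q : nat) (s t : R) (p : R * R) : Prop :=
  0 <= fst p <= PI /\ snd p = Pdens q s (fst p) t.

Definition box_meets (A : R * R -> Prop) (d : R) (m : Z * Z) : Prop :=
  exists p, A p /\
    IZR (fst m) * d <= fst p <= (IZR (fst m) + 1) * d /\
    IZR (snd m) * d <= snd p <= (IZR (snd m) + 1) * d.

Definition has_card {T : Type} (S : T -> Prop) (n : nat) : Prop :=
  exists l : list T, NoDup l /\ length l = n /\ (forall z, In z l <-> S z).

(* N(d) is well defined (finitely many meeting squares), and
   ln N(d) / ln(1/d) -> D as d -> 0+; i.e. upper and lower box dimensions
   both equal D, so dim_B A exists and equals D. *)
Definition box_dim_is (A : R * R -> Prop) (D : R) : Prop :=
  (forall d, 0 < d -> exists n, has_card (box_meets A d) n) /\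
  (forall eps, 0 < eps -> exists d0, 0 < d0 /\
     forall d n, 0 < d < d0 -> has_card (box_meets A d) n ->
       Rabs (ln (INR n) / ln (1 / d) - D) < eps).

(* Main.v *)
Require Import Defs.
From Stdlib Require Import Reals ZArith List.
From Coquelicot Require Import Coquelicot.
From Stdlib Require Import Arith Lia Lra ClassicalEpsilon.
Open Scope R_scope.

Module NTh.
Local Open Scope nat_scope.

Lemma div_pow q m : 1 <= m -> Nat.divide q (q ^ m).
Proof. intros H. destruct m; [lia|]. simpl. exists (q^m). lia. Qed.

Lemma pow_ge q k : 2 <= q -> 2 ^ k <= q ^ k.
Proof. intros H. apply Nat.pow_le_mono_l. lia. Qed.

Lemma pow_inj q m k : 2 <= q -> q ^ m = q ^ k -> m = k.
Proof. intros H E. apply Nat.pow_inj_r with q; lia. Qed.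

Lemma div1 q : 2 <= q -> ~ Nat.divide q 1.
Proof. intros H D. apply Nat.divide_1_r in D. lia. Qed.

Lemma NT1 q k m n : 2 <= q -> 2 <= k -> q^m + q^n = q^k + 1 -> (m = k /\ n = 0) \/ (m = 0 /\ n = k).
Proof.
  intros Hq Hk E.
  destruct m as [|m]; destruct n as [|n].
  - exfalso. simpl in E. assert (2^k <= q^k) by (apply pow_ge; auto).
    assert (2^2 <= 2^k) by (apply Nat.pow_le_mono_r; lia). simpl in *. lia.
  - right. split; auto. apply (pow_inj q); auto. rewrite Nat.pow_0_r in E. lia.
  - left. split; auto. apply (pow_inj q); auto. rewrite Nat.pow_0_r in E. lia.
  - exfalso. apply (div1 q Hq).
    apply (Nat.divide_add_cancel_r _ (q^k)). apply div_pow; lia.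
    rewrite <- E. apply Nat.divide_add_r; apply div_pow; lia.
Qed.

Lemma NT2 q k m n : 2 <= q -> 2 <= k -> q^m <> q^n + q^k + 1.
Proof.
  intros Hq Hk E.
  assert (2^k <= q^k) by (apply pow_ge; auto).
  assert (2^2 <= 2^k) by (apply Nat.pow_le_mono_r; lia). simpl in *.
  destruct m as [|m]. { simpl in E. lia. }
  destruct n as [|n].
  - rewrite Nat.pow_0_r in E. assert (Nat.divide q 2).
    { apply (Nat.divide_add_cancel_r _ (q^k)). apply div_pow; lia.
      replace (q^k + 2) with (q ^ S m) by lia. apply div_pow; lia. }
    assert (q <= 2) by (apply Nat.divide_pos_le; [lia|auto]). assert (q = 2) by lia. subst q.
    destruct m as [|m]. { simpl in E. lia. }
    assert (Nat.divide 4 2).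
    { apply (Nat.divide_add_cancel_r _ (2^k)).
      - destruct k as [|[|k]]; try lia. exists (2^k). simpl. lia.
      - replace (2^k + 2) with (2 ^ S (S m)) by lia. exists (2^m). simpl. lia. }
    assert (4 <= 2) by (apply Nat.divide_pos_le; [lia|auto]). lia.
  - apply (div1 q Hq).
    apply (Nat.divide_add_cancel_r _ (q ^ S n + q^k)).
    + apply Nat.divide_add_r; apply div_pow; lia.
    + rewrite <- E. apply div_pow; lia.
Qed.

Lemma NT1' q k m n : 2 <= q -> 3 <= k -> q^m + q^n = q^k + q -> (m = k /\ n = 1) \/ (m = 1 /\ n = k).
Proof.
  intros Hq Hk E.
  assert (2^k <= q^k) by (apply pow_ge; auto).
  assert (2^3 <= 2^k) by (apply Nat.pow_le_mono_r; lia). simpl in *.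
  destruct m as [|m].
  - exfalso. destruct n as [|n]. { simpl in E. lia. }
    apply (div1 q Hq). apply (Nat.divide_add_cancel_r _ (q ^ S n)). apply div_pow; lia.
    replace (q ^ S n + 1) with (q^k + q) by (rewrite Nat.pow_0_r in E; lia).
    apply Nat.divide_add_r; [apply div_pow; lia|apply Nat.divide_refl].
  - destruct n as [|n].
    + exfalso. apply (div1 q Hq). apply (Nat.divide_add_cancel_r _ (q ^ S m)). apply div_pow; lia.
      replace (q ^ S m + 1) with (q^k + q) by (rewrite Nat.pow_0_r in E; lia).
      apply Nat.divide_add_r; [apply div_pow; lia|apply Nat.divide_refl].
    + destruct k as [|k]; [lia|]. simpl in E.
      assert (E' : q^m + q^n = q^k + 1).
      { apply (Nat.mul_cancel_l _ _ q); [lia|]. nia. }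
      destruct (NT1 q k m n Hq ltac:(lia) E') as [[]|[]]; subst; auto.
Qed.

Lemma NT2' q k m n : 2 <= q -> 3 <= k -> q^m <> q^n + q^k + q.
Proof.
  intros Hq Hk E.
  destruct m as [|m]. { simpl in E. assert (1 <= q^n) by (apply Nat.neq_0_lt_0; apply Nat.pow_nonzero; lia). lia. }
  destruct n as [|n].
  - apply (div1 q Hq). apply (Nat.divide_add_cancel_r _ (q^k + q)).
    apply Nat.divide_add_r; [apply div_pow; lia|apply Nat.divide_refl].
    replace (q^k + q + 1) with (q ^ S m) by (simpl in E |- *; lia). apply div_pow; lia.
  - destruct k as [|k]; [lia|]. simpl in E.
    apply (NT2 q k m n Hq ltac:(lia)).
    apply (Nat.mul_cancel_l _ _ q); [lia|]. nia.
Qed.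

End NTh.
Import NTh.

Definition flo (y:R) : Z := (up y - 1)%Z.

Lemma flo_spec y : IZR (flo y) <= y < IZR (flo y) + 1.
Proof.
  unfold flo. destruct (archimed y) as [H1 H2].
  rewrite minus_IZR. simpl. lra.
Qed.

Lemma flo_le z y : IZR z <= y -> (z <= flo y)%Z.
Proof.
  intros H. destruct (flo_spec y) as [_ H2].
  destruct (Z_le_gt_dec z (flo y)) as [h|h]; auto.
  assert (IZR (flo y) + 1 <= IZR z).
  { rewrite <- plus_IZR. apply IZR_le. lia. }
  lra.
Qed.

Lemma NoDup_map_in {A B} (f : A -> B) (l : list A) :
  NoDup l -> (forall x y, In x l -> In y l -> f x = f y -> x = y) -> NoDup (map f l).
Proof.
  induction 1 as [|a l Ha Hl IH]; intros Hinj; simpl; constructor.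
  - intros Hin. apply in_map_iff in Hin as [y [Hy1 Hy2]].
    assert (y = a) by (apply Hinj; simpl; auto). subst. contradiction.
  - apply IH. intros x y Hx Hy. apply Hinj; simpl; auto.
Qed.

Definition Gr (f : R -> R) : R * R -> Prop :=
  fun p => 0 <= fst p <= PI /\ snd p = f (fst p).

Lemma col_lemma f d (m:nat) : continuity f -> 0 < d -> INR m * d + d <= PI ->
 exists xm xM, INR m*d <= xm <= INR m*d+d /\ INR m*d <= xM <= INR m*d + d /\
 (forall x, INR m*d <= x <= INR m*d+d -> f xm <= f x <= f xM) /\
 exists l, NoDup l /\ (forall z, In z l -> fst z = Z.of_nat m /\ box_meets (Gr f) d z)
   /\ (1 <= length l)%nat /\ f xM - f xm <= INR (length l) * d.
Proof.
  intros Hc Hd Hm.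
  assert (H0 : 0 <= INR m * d) by (apply Rmult_le_pos; [apply pos_INR|lra]).
  assert (Hab : INR m * d <= INR m * d + d) by lra.
  assert (Hcp : forall c, INR m*d <= c <= INR m*d+d -> continuity_pt f c) by (intros; apply Hc).
  destruct (continuity_ab_min f _ _ Hab Hcp) as [xm [Hxm1 Hxm2]].
  destruct (continuity_ab_maj f _ _ Hab Hcp) as [xM [HxM1 HxM2]].
  exists xm, xM. split; [auto|]. split; [auto|]. split.
  { intros x Hx. split; [apply Hxm1|apply HxM1]; auto. }
  set (lo := flo (f xm / d)). set (hi := flo (f xM / d)).
  assert (Hmm : f xm <= f xM) by (apply HxM1; auto).
  assert (Hlh : (lo <= hi)%Z).
  { unfold hi. apply flo_le. destruct (flo_spec (f xm / d)). fold lo in H.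
    apply Rle_trans with (f xm / d); auto. unfold Rdiv. apply Rmult_le_compat_r; auto.
    left; apply Rinv_0_lt_compat; auto. }
  set (cnt := (Z.to_nat (hi - lo) + 1)%nat).
  exists (map (fun i => (Z.of_nat m, (lo + Z.of_nat i)%Z)) (seq 0 cnt)).
  split; [|split; [|split]].
  - apply NoDup_map_in. apply seq_NoDup. intros x y _ _ H. injection H. lia.
  - intros z Hz. apply in_map_iff in Hz as [i [Hi1 Hi2]]. subst z. simpl. split; auto.
    apply in_seq in Hi2. unfold cnt in Hi2.
    set (y := Rmax (f xm) (IZR (lo + Z.of_nat i) * d)).
    assert (Hy : f xm <= y <= f xM /\ IZR (lo + Z.of_nat i) * d <= y <= (IZR (lo + Z.of_nat i) + 1) * d).
    { destruct (flo_spec (f xm / d)) as [L1 L2]. fold lo in L1, L2.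
      destruct (flo_spec (f xM / d)) as [U1 U2]. fold hi in U1, U2.
      assert (E1 : IZR lo * d <= f xm).
      { apply Rmult_le_reg_r with (/ d). apply Rinv_0_lt_compat; auto.
        rewrite Rmult_assoc, Rinv_r by lra. lra. }
      assert (E2 : f xm < (IZR lo + 1) * d).
      { apply Rmult_lt_reg_r with (/ d). apply Rinv_0_lt_compat; auto.
        rewrite Rmult_assoc, Rinv_r by lra. lra. }
      assert (E3 : IZR hi * d <= f xM).
      { apply Rmult_le_reg_r with (/ d). apply Rinv_0_lt_compat; auto.
        rewrite Rmult_assoc, Rinv_r by lra. lra. }
      assert (Hile : (lo + Z.of_nat i <= hi)%Z) by lia.
      assert (Hile' : IZR (lo + Z.of_nat i) * d <= IZR hi * d).
      { apply Rmult_le_compat_r; [lra|]. apply IZR_le; auto. }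
      unfold y. destruct (Z.eq_dec (Z.of_nat i) 0) as [Hi0|Hi0].
      - rewrite Hi0, Z.add_0_r. rewrite Rmax_left by lra. lra.
      - assert (IZR (lo + 1) <= IZR (lo + Z.of_nat i)) by (apply IZR_le; lia).
        rewrite plus_IZR in H. simpl in H.
        assert ((IZR lo + 1) * d <= IZR (lo + Z.of_nat i) * d) by (apply Rmult_le_compat_r; lra).
        rewrite Rmax_right by lra. lra. }
    destruct Hy as [Hy1 Hy2].
    destruct (IVT_gen f xm xM y Hc) as [x [Hx1 Hx2]].
    { rewrite Rmin_left, Rmax_right by lra. lra. }
    exists (x, y). simpl. rewrite INR_IZR_INZ in *.
    assert (IZR (Z.of_nat m) * d <= x <= IZR (Z.of_nat m) * d + d).
    { split.
      - apply Rle_trans with (Rmin xm xM); [apply Rmin_glb; lra|lra].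
      - apply Rle_trans with (Rmax xm xM); [lra|apply Rmax_lub; lra]. }
    unfold Gr; repeat split; simpl; try lra.
  - rewrite length_map, length_seq. unfold cnt. lia.
  - rewrite length_map, length_seq. unfold cnt.
    rewrite plus_INR, INR_IZR_INZ, Z2Nat.id by lia. simpl.
    rewrite minus_IZR.
    destruct (flo_spec (f xm / d)) as [L1 L2]. fold lo in L1, L2.
    destruct (flo_spec (f xM / d)) as [U1 U2]. fold hi in U1, U2.
    assert (f xM / d - f xm / d <= IZR hi - IZR lo + 1) by lra.
    unfold Rdiv in H. rewrite <- Rmult_minus_distr_r in H.
    apply Rmult_le_compat_r with (r := d) in H; [|lra].
    rewrite Rmult_assoc, Rinv_l, Rmult_1_r in H by lra. lra.
Qed.

Lemma cont_shift_abs f h : continuity f -> continuity (fun x => Rabs (f (x + h) - f x)).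
Proof.
  intros Hc. apply continuity_comp with (f1 := fun x => f (x+h) - f x) (f2 := Rabs).
  - apply continuity_minus; auto.
    apply continuity_comp with (f1 := fun x => x + h) (f2 := f); auto.
    apply continuity_plus; [apply derivable_continuous, derivable_id|apply continuity_const; intros ? ?; auto].
  - apply Rcontinuity_abs.
Qed.

Lemma ex_RInt_cont g a b : continuity g -> ex_RInt g a b.
Proof.
  intros Hc. apply (@ex_RInt_continuous R_CompleteNormedModule). intros z _. apply continuity_pt_filterlim. apply Hc.
Qed.

Lemma RInt_le_const g a b K : a <= b -> continuity g ->
  (forall x, a <= x <= b -> g x <= K) -> RInt g a b <= (b - a) * K.
Proof.
  intros Hab Hc HK.
  assert (RInt g a b <= RInt (fun _ => K) a b).
  { apply RInt_le; auto. apply ex_RInt_cont; auto. apply ex_RInt_const.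
    intros x Hx. apply HK. lra. }
  rewrite RInt_const in H. unfold scal in H; simpl in H. unfold mult in H; simpl in H. lra.
Qed.

Lemma RInt_ge0 g a b : a <= b -> continuity g -> (forall x, a <= x <= b -> 0 <= g x) -> 0 <= RInt g a b.
Proof.
  intros Hab Hc HK.
  assert (RInt (fun _ => 0) a b <= RInt g a b).
  { apply RInt_le; auto. apply ex_RInt_const. apply ex_RInt_cont; auto.
    intros x Hx. apply HK. lra. }
  rewrite RInt_const in H. unfold scal in H; simpl in H. unfold mult in H; simpl in H. lra.
Qed.

Lemma colsum f d h (M:nat): continuity f -> 0<d -> 0<h<=d -> INR M * d + d <= PI ->
 exists l, NoDup l /\ (forall z, In z l -> (0 <= fst z <= Z.of_nat M)%Z /\ box_meets (Gr f) d z)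
  /\ (M+1 <= length l)%nat /\
 exists o, 0 <= o /\ (forall x y, INR M*d <= x <= INR M*d+d -> INR M*d <= y <= INR M*d+d -> Rabs (f x - f y) <= o) /\
   RInt (fun x => Rabs (f (x+h) - f x)) 0 (INR M * d) + d * o <= 2 * d * d * INR (length l).
Proof.
  intros Hc Hd Hh. induction M as [|M IH]; intros HM.
  - destruct (col_lemma f d 0 Hc Hd HM) as [xm [xM [H1 [H2 [H3 [l [Hl1 [Hl2 [Hl3 Hl4]]]]]]]]].
    exists l. split; auto. split.
    { intros z Hz. destruct (Hl2 z Hz) as [A B]. rewrite A. split; auto; lia. }
    split; [lia|]. exists (f xM - f xm). simpl INR in *. split.
    { assert (f xm <= f xM) by (apply H3; lra). lra. }
    split.
    { intros x y Hx Hy. destruct (H3 x Hx), (H3 y Hy). apply Rabs_le. lra. }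
    rewrite Rmult_0_l, RInt_point. unfold zero; simpl.
    assert (0 <= INR (length l)) by apply pos_INR.
    assert (d * (f xM - f xm) <= d * (INR (length l) * d)) by (apply Rmult_le_compat_l; lra).
    nra.
  - rewrite S_INR in HM.
    assert (HM' : INR M * d + d <= PI) by nra.
    destruct (IH HM') as [l [Hl1 [Hl2 [Hl3 [o [Ho1 [Ho2 Ho3]]]]]]].
    destruct (col_lemma f d (S M) Hc Hd) as [xm [xM [H1 [H2 [H3 [l' [Hl1' [Hl2' [Hl3' Hl4']]]]]]]]].
    { rewrite S_INR. lra. }
    rewrite S_INR in *.
    exists (l ++ l'). split.
    { apply NoDup_app; auto. intros a Ha Ha'. destruct (Hl2 a Ha) as [A _]. destruct (Hl2' a Ha') as [B _]. lia. }
    split.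
    { intros z Hz. apply in_app_or in Hz as [Hz|Hz].
      - destruct (Hl2 z Hz) as [A B]. split; auto. lia.
      - destruct (Hl2' z Hz) as [A B]. split; auto. lia. }
    split; [rewrite length_app; lia|].
    exists (f xM - f xm). split.
    { assert (f xm <= f xM) by (apply H3; lra). lra. }
    split.
    { intros x y Hx Hy. destruct (H3 x Hx), (H3 y Hy). apply Rabs_le. lra. }
    assert (Hg := cont_shift_abs f h Hc).
    rewrite <- (RInt_Chasles _ 0 (INR M * d) ((INR M + 1) * d)) by (apply ex_RInt_cont; auto).
    unfold plus; simpl.
    assert (Hb : RInt (fun x => Rabs (f (x + h) - f x)) (INR M * d) ((INR M + 1) * d)
                 <= ((INR M + 1) * d - INR M * d) * (o + (f xM - f xm))).
    { apply RInt_le_const; [rewrite Rmult_plus_distr_r; lra|auto|].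
      intros x Hx. remember (INR M * d + d) as c eqn:Hcdef.
      destruct (Rle_dec (x + h) c) as [Hxc|Hxc].
      - rewrite Rabs_minus_sym. assert (0 <= f xM - f xm) by (destruct (H3 xm); lra).
        assert (Rabs (f x - f (x+h)) <= o) by (apply Ho2; lra). lra.
      - replace (f (x + h) - f x) with ((f (x+h) - f c) + (f c - f x)) by ring.
        eapply Rle_trans; [apply Rabs_triang|].
        assert (Rabs (f (x+h) - f c) <= f xM - f xm).
        { destruct (H3 (x+h)), (H3 c); try lra. apply Rabs_le; lra. }
        assert (Rabs (f c - f x) <= o) by (apply Ho2; lra). lra. }
    rewrite length_app, plus_INR.
    replace ((INR M + 1) * d - INR M * d) with d in Hb by ring.
    assert (d * (f xM - f xm) <= d * (INR (length l') * d)) by (apply Rmult_le_compat_l; lra).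
    nra.
Qed.

Lemma up_pos z : 0 <= z -> (1 <= up z)%Z.
Proof. intros H. destruct (archimed z) as [H1 _].
  destruct (Z_le_gt_dec 1 (up z)); auto.
  assert (up z <= 0)%Z by lia. apply IZR_le in H0. lra. Qed.

Lemma upper_list f d w : 0 < d -> 0 <= w ->
  (forall x y, 0<=x<=PI -> 0<=y<=PI -> Rabs (x-y) <= d -> Rabs (f x - f y) <= w) ->
  exists L : list (Z*Z), (forall z, box_meets (Gr f) d z -> In z L) /\
     INR (length L) <= (PI/d + 2) * (2*w/d + 3).
Proof.
  intros Hd Hw Hf.
  set (U := Z.to_nat (up (PI/d))).
  set (R0 := (Z.to_nat (up (2*w/d)) + 1)%nat).
  set (xr := fun mz : Z => Rmax 0 (Rmin PI (IZR mz * d))).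
  set (lo := fun mz : Z => (flo ((f (xr mz) - w)/d) - 1)%Z).
  set (g := fun ab : nat * nat => let mz := (Z.of_nat (fst ab) - 1)%Z in (mz, (lo mz + Z.of_nat (snd ab))%Z)).
  exists (map g (list_prod (seq 0 (U+1)) (seq 0 (R0+1)))).
  assert (HPI : 0 < PI) by apply PI_RGT_0.
  split.
  - intros [m r] [[x y] [[Hx Hy] [Hm Hr]]]. simpl in *. subst y.
    assert (Hm1 : (-1 <= m)%Z).
    { apply le_IZR. apply Rmult_le_reg_r with d; auto. nra. }
    assert (Hm2 : (m < up (PI/d))%Z).
    { apply lt_IZR. destruct (archimed (PI/d)) as [A _]. eapply Rle_lt_trans; [|apply A].
      apply Rmult_le_reg_r with d; auto. unfold Rdiv. rewrite Rmult_assoc, Rinv_l, Rmult_1_r by lra. lra. }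
    assert (Hxr : 0 <= xr m <= PI /\ Rabs (x - xr m) <= d).
    { unfold xr. split.
      - split; [apply Rmax_l|]. apply Rmax_lub; [lra|apply Rmin_l].
      - destruct (Rle_dec (IZR m * d) 0).
        + rewrite Rmin_right by lra. rewrite Rmax_left by lra. apply Rabs_le. nra.
        + rewrite Rmin_right by lra. rewrite Rmax_right by lra. apply Rabs_le. nra. }
    destruct Hxr as [Hxr1 Hxr2].
    assert (Hfw := Hf x (xr m) Hx Hxr1 Hxr2). apply Rabs_le_between in Hfw.
    set (yy := (f (xr m) - w)/d) in *.
    destruct (flo_spec yy) as [F1 F2].
    assert (Hr1 : (lo m <= r)%Z).
    { unfold lo. fold yy. apply le_IZR. rewrite minus_IZR. simpl.
      assert (yy <= IZR r + 1).
      { unfold yy. apply Rmult_le_reg_r with d; auto. unfold Rdiv. rewrite Rmult_assoc, Rinv_l, Rmult_1_r by lra. lra. }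
      lra. }
    assert (Hr2 : (r - lo m <= Z.of_nat R0)%Z).
    { unfold R0. rewrite Nat2Z.inj_add, Z2Nat.id by (apply Z.le_trans with 1%Z; [lia|apply up_pos; unfold Rdiv; apply Rmult_le_pos; [lra|left; apply Rinv_0_lt_compat; auto]]).
      cut (r - lo m < up (2*w/d) + 2)%Z; [lia|].
      apply lt_IZR. rewrite plus_IZR, !minus_IZR. simpl. unfold lo. fold yy. rewrite minus_IZR. simpl.
      destruct (archimed (2*w/d)) as [A _].
      assert (IZR r <= yy + 2*w/d).
      { unfold yy. apply Rmult_le_reg_r with d; auto. unfold Rdiv. rewrite Rmult_plus_distr_r, !Rmult_assoc, Rinv_l, Rmult_1_r by lra. lra. }
      lra. }
    apply in_map_iff. exists (Z.to_nat (m+1), Z.to_nat (r - lo m)). split.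
    + unfold g. simpl. replace (Z.of_nat (Z.to_nat (m + 1)) - 1)%Z with m by lia. rewrite Z2Nat.id by lia. f_equal; lia.
    + apply in_prod_iff. split; apply in_seq; split; try lia.
  - rewrite length_map, length_prod, !length_seq, mult_INR, !plus_INR. simpl INR.
    assert (HU : INR U <= PI/d + 1).
    { unfold U. rewrite INR_IZR_INZ, Z2Nat.id. destruct (archimed (PI/d)); lra.
      apply Z.le_trans with 1%Z; [lia|apply up_pos]. unfold Rdiv; apply Rmult_le_pos; [lra|left; apply Rinv_0_lt_compat; auto]. }
    assert (HR : INR R0 <= 2*w/d + 2).
    { unfold R0. rewrite plus_INR, INR_IZR_INZ, Z2Nat.id. destruct (archimed (2*w/d)); simpl; lra.
      apply Z.le_trans with 1%Z; [lia|apply up_pos]. unfold Rdiv; apply Rmult_le_pos; [lra|left; apply Rinv_0_lt_compat; auto]. }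
    apply Rmult_le_compat; try (apply Rplus_le_le_0_compat; [apply pos_INR|lra]); lra.
Qed.

Lemma box_card_exists f d w : 0 < d -> 0 <= w ->
  (forall x y, 0<=x<=PI -> 0<=y<=PI -> Rabs (x-y) <= d -> Rabs (f x - f y) <= w) ->
  exists n, has_card (box_meets (Gr f) d) n.
Proof.
  intros Hd Hw Hf. destruct (upper_list f d w Hd Hw Hf) as [L [HL _]].
  set (P := fun z => if excluded_middle_informative (box_meets (Gr f) d z) then true else false).
  assert (Zp : forall x y : Z*Z, {x = y} + {x <> y}) by (decide equality; apply Z.eq_dec).
  exists (length (nodup Zp (filter P L))). exists (nodup Zp (filter P L)).
  split; [apply NoDup_nodup|]. split; auto.
  intros z. rewrite nodup_In, filter_In. unfold P.
  destruct (excluded_middle_informative (box_meets (Gr f) d z)); split; intros H; try tauto.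
  - split; auto.
  - destruct H; discriminate.
Qed.

Lemma box_card_upper f d w n : 0 < d -> 0 <= w ->
  (forall x y, 0<=x<=PI -> 0<=y<=PI -> Rabs (x-y) <= d -> Rabs (f x - f y) <= w) ->
  has_card (box_meets (Gr f) d) n -> INR n <= (PI/d + 2) * (2*w/d + 3).
Proof.
  intros Hd Hw Hf [l [Hl1 [Hl2 Hl3]]]. destruct (upper_list f d w Hd Hw Hf) as [L [HL HLn]].
  subst n. eapply Rle_trans; [|apply HLn]. apply le_INR. apply NoDup_incl_length; auto.
  intros z Hz. apply HL. apply Hl3; auto.
Qed.

Lemma box_card_lower f d h n (M:nat) : continuity f -> 0 < d -> 0 < h <= d -> INR M * d + d <= PI ->
  has_card (box_meets (Gr f) d) n ->
  INR M + 1 <= INR n /\ RInt (fun x => Rabs (f (x+h) - f x)) 0 (INR M * d) <= 2 * d * d * INR n.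
Proof.
  intros Hc Hd Hh HM [L [HL1 [HL2 HL3]]].
  destruct (colsum f d h M Hc Hd Hh HM) as [l [Hl1 [Hl2 [Hl3 [o [Ho1 [_ Ho3]]]]]]].
  assert (Hn : (length l <= n)%nat).
  { subst n. apply NoDup_incl_length; auto. intros z Hz. apply HL3. apply Hl2; auto. }
  apply le_INR in Hn. apply le_INR in Hl3. rewrite plus_INR in Hl3. simpl in Hl3.
  split; [lra|].
  assert (0 <= d * o) by (apply Rmult_le_pos; lra).
  assert (2*d*d*INR (length l) <= 2*d*d*INR n) by (apply Rmult_le_compat_l; [nra|auto]).
  lra.
Qed.

Definition Ser (r:R) (u : nat -> R) := Series (fun n => r^n * u n).

Lemma geom_sum_le r K : 0 <= r < 1 -> sum_f_R0 (fun n => r^n) K <= / (1 - r).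
Proof.
  intros Hr. rewrite tech3 by lra. unfold Rdiv. rewrite <- (Rmult_1_l (/ (1 - r))) at 2.
  apply Rmult_le_compat_r.
  left; apply Rinv_0_lt_compat; lra. assert (0 <= r ^ S K) by (apply pow_le; lra). lra.
Qed.

Lemma ex_series_geom_scal r c : 0 <= r < 1 -> ex_series (fun n => c * r^n).
Proof. intros Hr. apply (@ex_series_scal_l R_AbsRing R_NormedModule). apply ex_series_geom. rewrite Rabs_pos_eq; lra. Qed.

Lemma Ser_ex r u : 0 <= r < 1 -> (forall n, Rabs (u n) <= 1) -> ex_series (fun n => r^n * u n).
Proof.
  intros Hr Hu. apply (@ex_series_le R_AbsRing R_CompleteNormedModule) with (b := fun n => r^n).
  - intros n. change (norm (r^n * u n)) with (Rabs (r^n * u n)). rewrite Rabs_mult.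
    rewrite (Rabs_pos_eq (r^n)) by (apply pow_le; lra).
    specialize (Hu n). assert (0 <= r^n) by (apply pow_le; lra). nra.
  - apply ex_series_geom. rewrite Rabs_pos_eq; lra.
Qed.

Lemma Ser_le_gen a b : (forall n, Rabs (a n) <= b n) -> ex_series b -> Rabs (Series a) <= Series b.
Proof.
  intros H Hb.
  assert (Ha : ex_series (fun n => Rabs (a n))).
  { apply (@ex_series_le R_AbsRing R_CompleteNormedModule) with (b := b); auto.
    intros n. change (norm (Rabs (a n))) with (Rabs (Rabs (a n))). rewrite Rabs_Rabsolu. auto. }
  eapply Rle_trans; [apply Series_Rabs; auto|]. apply Series_le; auto.
  intros n; split; [apply Rabs_pos|auto].
Qed.

Lemma Ser_bound r u : 0 <= r < 1 -> (forall n, Rabs (u n) <= 1) -> Rabs (Ser r u) <= / (1 - r).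
Proof.
  intros Hr Hu. unfold Ser. rewrite <- Series_geom by (rewrite Rabs_pos_eq; lra).
  apply Ser_le_gen. intros n. rewrite Rabs_mult, (Rabs_pos_eq (r^n)) by (apply pow_le; lra).
  specialize (Hu n). assert (0 <= r^n) by (apply pow_le; lra). nra.
  apply ex_series_geom. rewrite Rabs_pos_eq; lra.
Qed.

Lemma sum_bound r u K : 0 <= r < 1 -> (forall n, Rabs (u n) <= 1) ->
  Rabs (sum_f_R0 (fun n => r^n * u n) K) <= / (1 - r).
Proof.
  intros Hr Hu. eapply Rle_trans; [apply sum_f_R0_triangle|].
  eapply Rle_trans; [|apply (geom_sum_le r K Hr)]. apply sum_Rle. intros n _.
  rewrite Rabs_mult, (Rabs_pos_eq (r^n)) by (apply pow_le; lra).
  specialize (Hu n). assert (0 <= r^n) by (apply pow_le; lra). nra.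
Qed.

Lemma Ser_diff r u v c rho : 0 <= r < 1 -> (forall n, Rabs (u n) <= 1) -> (forall n, Rabs (v n) <= 1) ->
  0 <= rho < 1 -> (forall n, r^n * Rabs (u n - v n) <= c * rho ^ n) ->
  Rabs (Ser r u - Ser r v) <= c / (1 - rho).
Proof.
  intros Hr Hu Hv Hrho H. unfold Ser. rewrite <- Series_minus by (apply Ser_ex; auto).
  unfold Rdiv. rewrite <- Series_geom by (rewrite Rabs_pos_eq; lra).
  rewrite <- Series_scal_l. apply Ser_le_gen.
  - intros n. rewrite <- Rmult_minus_distr_l, Rabs_mult, (Rabs_pos_eq (r^n)) by (apply pow_le; lra). auto.
  - apply ex_series_geom_scal; auto.
Qed.

Lemma Ser_tail r u K : 0 <= r < 1 -> (forall n, Rabs (u n) <= 1) ->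
  Rabs (Ser r u - sum_f_R0 (fun n => r^n * u n) K) <= r ^ (S K) / (1 - r).
Proof.
  intros Hr Hu. unfold Ser. rewrite (Series_incr_n _ (S K)) by (auto with arith || apply Ser_ex; auto).
  simpl Init.Nat.pred. replace (sum_f_R0 (fun n : nat => r ^ n * u n) K +
   Series (fun k : nat => r ^ (S K + k) * u (S K + k)%nat) - sum_f_R0 (fun n : nat => r ^ n * u n) K)
   with (Series (fun k : nat => r ^ (S K + k) * u (S K + k)%nat)) by ring.
  unfold Rdiv. rewrite <- Series_geom by (rewrite Rabs_pos_eq; lra).
  rewrite <- Series_scal_l. apply Ser_le_gen.
  - intros n. rewrite pow_add, Rabs_mult, Rabs_mult, (Rabs_pos_eq (r ^ S K)), (Rabs_pos_eq (r^n)) by (apply pow_le; lra).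
    specialize (Hu (S K + n)%nat). assert (0 <= r^n) by (apply pow_le; lra).
    assert (0 <= r^S K) by (apply pow_le; lra). assert (0 <= r^S K * r^n) by (apply Rmult_le_pos; auto). nra.
  - apply ex_series_geom_scal; auto.
Qed.

Definition rr q s := Rpower (INR q) (s-2).
Definition uA q t x n := sin (INR q ^ n * x) * cos (INR q ^ (2*n) * t).
Definition uB q t x n := sin (INR q ^ n * x) * sin (INR q ^ (2*n) * t).
Definition AA q s t x := Ser (rr q s) (uA q t x).
Definition BB q s t x := Ser (rr q s) (uB q t x).
Definition Sb q s := / (1 - rr q s).

Lemma INRq_gt1 q : (2 <= q)%nat -> 1 < INR q.
Proof. intros H. apply le_INR in H. simpl in H. lra. Qed.

Lemma rr_bounds q s : (2 <= q)%nat -> s < 2 -> 0 < rr q s < 1.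
Proof.
  intros Hq Hs. unfold rr. split.
  - unfold Rpower. apply exp_pos.
  - rewrite <- (Rpower_O (INR q)) by (pose proof (INRq_gt1 q Hq); lra).
    apply Rpower_lt; [apply INRq_gt1; auto|lra].
Qed.

Lemma coef_rr q s n : (2 <= q)%nat -> coef q s n = rr q s ^ n.
Proof.
  intros Hq. unfold coef, rr. rewrite <- Rpower_pow by (unfold Rpower; apply exp_pos).
  rewrite Rpower_mult. f_equal. ring.
Qed.

Lemma abs_sin_le1 x : Rabs (sin x) <= 1.
Proof. apply Rabs_le. apply SIN_bound. Qed.
Lemma abs_cos_le1 x : Rabs (cos x) <= 1.
Proof. apply Rabs_le. apply COS_bound. Qed.

Lemma uA_le q t x n : Rabs (uA q t x n) <= 1.
Proof. unfold uA. rewrite Rabs_mult. pose proof (abs_sin_le1 (INR q ^ n * x)).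
  pose proof (abs_cos_le1 (INR q ^ (2*n) * t)). pose proof (Rabs_pos (sin (INR q ^ n * x))).
  pose proof (Rabs_pos (cos (INR q ^ (2*n) * t))). nra. Qed.
Lemma uB_le q t x n : Rabs (uB q t x n) <= 1.
Proof. unfold uB. rewrite Rabs_mult. pose proof (abs_sin_le1 (INR q ^ n * x)).
  pose proof (abs_sin_le1 (INR q ^ (2*n) * t)). pose proof (Rabs_pos (sin (INR q ^ n * x))).
  pose proof (Rabs_pos (sin (INR q ^ (2*n) * t))). nra. Qed.

Lemma Pdens_eq q s x t : (2 <= q)%nat ->
  Pdens q s x t = Nconst q s ^ 2 * (AA q s t x ^ 2 + BB q s t x ^ 2).
Proof.
  intros Hq. unfold Pdens, RePsi, ImPsi, AA, BB, Ser.
  rewrite (Series_ext (fun n => coef q s n * sin (INR q ^ n * x) * cos (INR q ^ (2 * n) * t))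
     (fun n => rr q s ^ n * uA q t x n)).
  rewrite (Series_ext (fun n => coef q s n * sin (INR q ^ n * x) * sin (INR q ^ (2 * n) * t))
     (fun n => rr q s ^ n * uB q t x n)). ring.
  all: intros n; rewrite coef_rr by auto; unfold uA, uB; ring.
Qed.

Lemma AA_bound q s t x : (2 <= q)%nat -> s < 2 -> Rabs (AA q s t x) <= Sb q s.
Proof. intros Hq Hs. pose proof (rr_bounds q s Hq Hs). apply Ser_bound. lra. apply uA_le. Qed.
Lemma BB_bound q s t x : (2 <= q)%nat -> s < 2 -> Rabs (BB q s t x) <= Sb q s.
Proof. intros Hq Hs. pose proof (rr_bounds q s Hq Hs). apply Ser_bound. lra. apply uB_le. Qed.

Lemma Sb_pos q s : (2 <= q)%nat -> s < 2 -> 1 <= Sb q s.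
Proof. intros Hq Hs. pose proof (rr_bounds q s Hq Hs). unfold Sb.
  rewrite <- Rinv_1. apply Rinv_le_contravar; lra. Qed.

Lemma P_bound q s x t : (2 <= q)%nat -> s < 2 ->
  Rabs (Pdens q s x t) <= 2 * Nconst q s ^ 2 * Sb q s ^ 2.
Proof.
  intros Hq Hs. rewrite Pdens_eq by auto.
  pose proof (AA_bound q s t x Hq Hs). pose proof (BB_bound q s t x Hq Hs).
  assert (AA q s t x ^ 2 <= Sb q s ^ 2).
  { rewrite <- (Rabs_pos_eq (Sb q s)) by (pose proof (Sb_pos q s Hq Hs); lra).
    rewrite <- !Rsqr_pow2. apply Rsqr_le_abs_1. rewrite Rabs_Rabsolu. rewrite (Rabs_pos_eq (Sb q s)) by (pose proof (Sb_pos q s Hq Hs); lra). auto. }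
  assert (BB q s t x ^ 2 <= Sb q s ^ 2).
  { rewrite <- (Rabs_pos_eq (Sb q s)) by (pose proof (Sb_pos q s Hq Hs); lra).
    rewrite <- !Rsqr_pow2. apply Rsqr_le_abs_1. rewrite Rabs_Rabsolu. rewrite (Rabs_pos_eq (Sb q s)) by (pose proof (Sb_pos q s Hq Hs); lra). auto. }
  assert (0 <= Nconst q s ^ 2) by (apply pow2_ge_0).
  rewrite Rabs_pos_eq.
  - assert (Nconst q s ^ 2 * (AA q s t x ^ 2 + BB q s t x ^ 2) <= Nconst q s ^ 2 * (Sb q s ^ 2 + Sb q s ^ 2))
      by (apply Rmult_le_compat_l; lra). lra.
  - apply Rmult_le_pos; auto. pose proof (pow2_ge_0 (AA q s t x)). pose proof (pow2_ge_0 (BB q s t x)). lra.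
Qed.

Lemma sq_diff a b c d S : Rabs a <= S -> Rabs b <= S -> Rabs c <= S -> Rabs d <= S ->
  Rabs ((a^2 + c^2) - (b^2 + d^2)) <= 2 * S * (Rabs (a - b) + Rabs (c - d)).
Proof.
  intros Ha Hb Hc Hd.
  replace ((a^2 + c^2) - (b^2 + d^2)) with ((a - b) * (a + b) + (c - d) * (c + d)) by ring.
  eapply Rle_trans; [apply Rabs_triang|]. rewrite !Rabs_mult.
  assert (Rabs (a + b) <= 2 * S) by (eapply Rle_trans; [apply Rabs_triang|lra]).
  assert (Rabs (c + d) <= 2 * S) by (eapply Rle_trans; [apply Rabs_triang|lra]).
  pose proof (Rabs_pos (a - b)). pose proof (Rabs_pos (c - d)).
  pose proof (Rabs_pos (a + b)). pose proof (Rabs_pos (c + d)). nra.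
Qed.

Lemma sin_le_id x : 0 <= x -> sin x <= x.
Proof. intros H. destruct (Req_dec x 0). subst; rewrite sin_0; lra. left; apply sin_lt_x; lra. Qed.

Lemma abs_sin_le x : Rabs (sin x) <= Rabs x.
Proof.
  assert (K : forall y, 0 <= y -> Rabs (sin y) <= y).
  { intros y Hy. apply Rabs_le. split; [|apply sin_le_id; auto].
    destruct (Rle_dec 1 y). pose proof (SIN_bound y). lra.
    assert (0 <= sin y) by (apply sin_ge_0; [lra| pose proof PI2_3_2; lra]). lra. }
  destruct (Rle_dec 0 x).
  - rewrite (Rabs_pos_eq x) by auto. apply K; auto.
  - replace x with (- (- x)) by ring. rewrite sin_neg, Rabs_Ropp, Rabs_Ropp. rewrite (Rabs_pos_eq (-x)) by lra. apply K; lra.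
Qed.

Lemma sin_lip a b : Rabs (sin a - sin b) <= Rabs (a - b).
Proof.
  rewrite form4. rewrite !Rabs_mult. rewrite (Rabs_pos_eq 2) by lra.
  pose proof (abs_cos_le1 ((a+b)/2)). pose proof (abs_sin_le ((a-b)/2)).
  pose proof (Rabs_pos (cos ((a+b)/2))). pose proof (Rabs_pos (sin ((a-b)/2))).
  replace (Rabs ((a - b)/2)) with (Rabs (a-b) / 2) in H0.
  nra. unfold Rdiv. rewrite Rabs_mult. rewrite (Rabs_pos_eq (/2)) by lra. auto.
Qed.

Lemma Rpower_ge_self D th : 0 < D < 1 -> 0 < th <= 1 -> D <= Rpower D th.
Proof.
  intros HD Hth. rewrite <- (Rpower_1 D) at 1 by lra. unfold Rpower.
  assert (ln D < 0) by (rewrite <- ln_1; apply ln_increasing; lra).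
  destruct (Req_dec th 1). subst; lra.
  left. apply exp_increasing. nra.
Qed.

Lemma Rpower_ge1 D th : 1 <= D -> 0 <= th -> 1 <= Rpower D th.
Proof. intros HD Hth. rewrite <- (Rpower_O D) by lra. apply Rle_Rpower; auto. Qed.

Lemma Rpower_pos D th : 0 < Rpower D th.
Proof. unfold Rpower. apply exp_pos. Qed.

Lemma sin_holder th a b D : 0 < th <= 1 -> 0 < D -> Rabs (a - b) <= D ->
  Rabs (sin a - sin b) <= 2 * Rpower D th.
Proof.
  intros Hth HD Hab. destruct (Rle_dec 1 D).
  - pose proof (Rpower_ge1 D th r ltac:(lra)).
    replace (sin a - sin b) with (sin a + - sin b) by ring.
    eapply Rle_trans; [apply Rabs_triang|]. rewrite Rabs_Ropp.
    pose proof (abs_sin_le1 a). pose proof (abs_sin_le1 b). lra.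
  - pose proof (Rpower_ge_self D th ltac:(lra) Hth). pose proof (sin_lip a b). lra.
Qed.

Lemma Rpower_split Q n d th : 0 < Q -> 0 < d -> Rpower (Q^n * d) th = (Rpower Q th)^n * Rpower d th.
Proof.
  intros HQ Hd. rewrite <- Rpower_mult_distr by (try apply pow_lt; auto).
  f_equal. rewrite <- Rpower_pow by auto. rewrite <- Rpower_pow by apply Rpower_pos.
  rewrite !Rpower_mult. f_equal. ring.
Qed.

Definition rho q s th := rr q s * Rpower (INR q) th.

Lemma u_holder q s th d x y n : (2 <= q)%nat -> s < 2 -> 0 < th <= 1 -> 0 < d -> Rabs (x - y) <= d ->
  rr q s ^ n * Rabs (uA q 0 x n - uA q 0 y n) <= 0 -> True.
Proof. auto. Qed.

Lemma term_holder q s th d x y n c : (2 <= q)%nat -> s < 2 -> 0 < th <= 1 -> 0 < d -> Rabs (x - y) <= d ->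
  rr q s ^ n * Rabs ((sin (INR q ^ n * x) - sin (INR q ^ n * y)) * c) <= Rabs c * (2 * Rpower d th) * rho q s th ^ n.
Proof.
  intros Hq Hs Hth Hd Hxy.
  pose proof (INRq_gt1 q Hq). pose proof (rr_bounds q s Hq Hs).
  assert (Hs1 : Rabs (sin (INR q ^ n * x) - sin (INR q ^ n * y)) <= 2 * Rpower (INR q ^ n * d) th).
  { apply sin_holder; auto. apply Rmult_lt_0_compat; auto. apply pow_lt; lra.
    rewrite <- Rmult_minus_distr_l, Rabs_mult, Rabs_pos_eq by (apply pow_le; lra).
    apply Rmult_le_compat_l; auto. apply pow_le; lra. }
  rewrite Rpower_split in Hs1 by lra. unfold rho. rewrite Rpow_mult_distr.
  rewrite Rabs_mult.
  assert (0 <= rr q s ^ n) by (apply pow_le; lra).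
  assert (0 <= Rpower (INR q) th ^ n) by (apply pow_le; left; apply Rpower_pos).
  pose proof (Rpower_pos d th). pose proof (Rabs_pos c).
  pose proof (Rabs_pos (sin (INR q ^ n * x) - sin (INR q ^ n * y))).
  assert (rr q s ^ n * Rabs (sin (INR q ^ n * x) - sin (INR q ^ n * y)) <= rr q s ^ n * (2 * (Rpower (INR q) th ^ n * Rpower d th)))
    by (apply Rmult_le_compat_l; auto).
  assert (rr q s ^ n * Rabs (sin (INR q ^ n * x) - sin (INR q ^ n * y)) * Rabs c <= rr q s ^ n * (2 * (Rpower (INR q) th ^ n * Rpower d th)) * Rabs c)
    by (apply Rmult_le_compat_r; auto).
  nra.
Qed.

Lemma AB_holder q s t th d x y : (2 <= q)%nat -> s < 2 -> 0 < th <= 1 -> rho q s th < 1 -> 0 < d -> Rabs (x - y) <= d ->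
  Rabs (AA q s t x - AA q s t y) <= 2 * Rpower d th / (1 - rho q s th) /\
  Rabs (BB q s t x - BB q s t y) <= 2 * Rpower d th / (1 - rho q s th).
Proof.
  intros Hq Hs Hth Hrho Hd Hxy. pose proof (rr_bounds q s Hq Hs).
  assert (0 <= rho q s th) by (unfold rho; apply Rmult_le_pos; [lra|left; apply Rpower_pos]).
  split; apply Ser_diff; try lra; try apply uA_le; try apply uB_le; intros n.
  - unfold uA. rewrite <- Rmult_minus_distr_r.
    eapply Rle_trans; [apply term_holder; eauto|].
    pose proof (abs_cos_le1 (INR q ^ (2*n) * t)). pose proof (Rpower_pos d th).
    assert (0 <= rho q s th ^ n) by (apply pow_le; auto).
    set (X := 2 * Rpower d th * rho q s th ^ n).
    assert (0 <= X) by (unfold X; apply Rmult_le_pos; lra).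
    replace (Rabs (cos (INR q ^ (2 * n) * t)) * (2 * Rpower d th) * rho q s th ^ n) with (Rabs (cos (INR q ^ (2 * n) * t)) * X) by (unfold X; ring).
    nra.
  - unfold uB. rewrite <- Rmult_minus_distr_r.
    eapply Rle_trans; [apply term_holder; eauto|].
    pose proof (abs_sin_le1 (INR q ^ (2*n) * t)). pose proof (Rpower_pos d th).
    assert (0 <= rho q s th ^ n) by (apply pow_le; auto).
    set (X := 2 * Rpower d th * rho q s th ^ n).
    assert (0 <= X) by (unfold X; apply Rmult_le_pos; lra).
    replace (Rabs (sin (INR q ^ (2 * n) * t)) * (2 * Rpower d th) * rho q s th ^ n) with (Rabs (sin (INR q ^ (2 * n) * t)) * X) by (unfold X; ring).
    nra.
Qed.

Definition HC q s th := Nconst q s ^ 2 * (2 * Sb q s) * (4 / (1 - rho q s th)).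

Lemma P_holder q s t th d x y : (2 <= q)%nat -> s < 2 -> 0 < th <= 1 -> rho q s th < 1 -> 0 < d -> Rabs (x - y) <= d ->
  Rabs (Pdens q s x t - Pdens q s y t) <= HC q s th * Rpower d th.
Proof.
  intros Hq Hs Hth Hrho Hd Hxy. rewrite !Pdens_eq by auto.
  rewrite <- Rmult_minus_distr_l, Rabs_mult, Rabs_pos_eq by apply pow2_ge_0.
  destruct (AB_holder q s t th d x y Hq Hs Hth Hrho Hd Hxy) as [H1 H2].
  pose proof (sq_diff (AA q s t x) (AA q s t y) (BB q s t x) (BB q s t y) (Sb q s)
    (AA_bound q s t x Hq Hs) (AA_bound q s t y Hq Hs) (BB_bound q s t x Hq Hs) (BB_bound q s t y Hq Hs)).
  unfold HC. pose proof (Sb_pos q s Hq Hs).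
  assert (0 < 1 - rho q s th) by lra.
  assert (2 * Sb q s * (Rabs (AA q s t x - AA q s t y) + Rabs (BB q s t x - BB q s t y)) <= 2 * Sb q s * (4 / (1 - rho q s th)) * Rpower d th).
  { replace (2 * Sb q s * (4 / (1 - rho q s th)) * Rpower d th) with (2 * Sb q s * (2 * Rpower d th / (1 - rho q s th) + 2 * Rpower d th / (1 - rho q s th))) by (field; lra).
    apply Rmult_le_compat_l; lra. }
  pose proof (pow2_ge_0 (Nconst q s)).
  assert (Nconst q s ^ 2 * Rabs (AA q s t x ^ 2 + BB q s t x ^ 2 - (AA q s t y ^ 2 + BB q s t y ^ 2)) <= Nconst q s ^ 2 * (2 * Sb q s * (4 / (1 - rho q s th)) * Rpower d th)).
  { apply Rmult_le_compat_l; lra. }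
  lra.
Qed.

Lemma HC_nonneg q s th : (2 <= q)%nat -> s < 2 -> rho q s th < 1 -> 0 <= HC q s th.
Proof.
  intros Hq Hs Hr. unfold HC. pose proof (Sb_pos q s Hq Hs). pose proof (pow2_ge_0 (Nconst q s)).
  apply Rmult_le_pos. apply Rmult_le_pos; lra. unfold Rdiv. apply Rmult_le_pos; [lra|].
  left; apply Rinv_0_lt_compat; lra.
Qed.

Lemma holder_cont f C th : 0 < th -> 0 <= C ->
  (forall d x y, 0 < d -> Rabs (x - y) <= d -> Rabs (f x - f y) <= C * Rpower d th) -> continuity f.
Proof.
  intros Hth HC Hf x eps Heps.
  set (a := eps / (C + 1)).
  assert (Ha : 0 < a) by (unfold a; apply Rdiv_lt_0_compat; lra).
  exists (Rpower a (/ th)). split; [apply Rpower_pos|].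
  intros y [_ Hy]. simpl in *. unfold R_dist in *.
  assert (Rabs (f y - f x) <= C * Rpower (Rpower a (/ th)) th).
  { apply Hf; [apply Rpower_pos|lra]. }
  rewrite Rpower_mult, Rinv_l, Rpower_1 in H by lra.
  unfold a in H. assert (C * (eps / (C + 1)) < eps).
  { unfold Rdiv. rewrite <- Rmult_assoc. apply Rmult_lt_reg_r with (C+1); [lra|].
    rewrite Rmult_assoc, Rinv_l by lra. nra. }
  lra.
Qed.

Definition AK q s t K x := sum_f_R0 (fun n => rr q s ^ n * uA q t x n) K.
Definition BK q s t K x := sum_f_R0 (fun n => rr q s ^ n * uB q t x n) K.
Definition PK q s t K x := Nconst q s ^ 2 * (AK q s t K x ^ 2 + BK q s t K x ^ 2).

Lemma P_PK q s t K x : (2 <= q)%nat -> s < 2 ->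
  Rabs (Pdens q s x t - PK q s t K x) <= Nconst q s ^ 2 * (4 * Sb q s ^ 2 * rr q s ^ (S K)).
Proof.
  intros Hq Hs. pose proof (rr_bounds q s Hq Hs). rewrite Pdens_eq by auto. unfold PK.
  rewrite <- Rmult_minus_distr_l, Rabs_mult, Rabs_pos_eq by apply pow2_ge_0.
  apply Rmult_le_compat_l; [apply pow2_ge_0|].
  assert (HA : Rabs (AK q s t K x) <= Sb q s) by (apply sum_bound; [lra|apply uA_le]).
  assert (HB : Rabs (BK q s t K x) <= Sb q s) by (apply sum_bound; [lra|apply uB_le]).
  eapply Rle_trans; [apply sq_diff; eauto using AA_bound, BB_bound|].
  assert (T1 : Rabs (AA q s t x - AK q s t K x) <= rr q s ^ S K * Sb q s) by (apply Ser_tail; [lra|apply uA_le]).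
  assert (T2 : Rabs (BB q s t x - BK q s t K x) <= rr q s ^ S K * Sb q s) by (apply Ser_tail; [lra|apply uB_le]).
  pose proof (Sb_pos q s Hq Hs).
  assert (2 * Sb q s * (Rabs (AA q s t x - AK q s t K x) + Rabs (BB q s t x - BK q s t K x)) <= 2 * Sb q s * (2 * (rr q s ^ S K * Sb q s))) by (apply Rmult_le_compat_l; lra).
  lra.
Qed.

Lemma P_cont q s t th : (2 <= q)%nat -> s < 2 -> 0 < th <= 1 -> rho q s th < 1 ->
  continuity (fun x => Pdens q s x t).
Proof.
  intros Hq Hs Hth Hr. apply holder_cont with (HC q s th) th; try lra.
  apply HC_nonneg; auto. intros d x y Hd Hxy. apply P_holder; auto.
Qed.

Definition cval (z : Z) : R := if Z.eq_dec z 0 then PI else 0.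

Lemma is_RInt_cos_int (z : Z) : is_RInt (fun x => cos (IZR z * x)) 0 PI (cval z).
Proof.
  unfold cval. destruct (Z.eq_dec z 0) as [E|E].
  - subst z. apply is_RInt_ext with (fun _ => 1).
    { intros x _. simpl. rewrite Rmult_0_l, cos_0. auto. }
    replace PI with (scal (PI - 0) 1) at 2. apply (@is_RInt_const R_NormedModule).
    unfold scal; simpl; unfold mult; simpl. ring.
  - assert (Hz : IZR z <> 0) by (apply not_0_IZR; auto).
    set (F := fun x => sin (IZR z * x) / IZR z).
    assert (Hv : minus (F PI) (F 0) = 0).
    { unfold F. rewrite Rmult_0_r, sin_0. rewrite sin_eq_0_1 by (exists z; auto).
      unfold minus, plus, opp; simpl. field; auto. }
    assert (HI : is_RInt (fun x => cos (IZR z * x)) 0 PI (minus (F PI) (F 0))).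
    { apply (@is_RInt_derive R_CompleteNormedModule).
      * intros x _. unfold F. auto_derive; auto. field; auto.
      * intros x _. apply continuity_pt_filterlim.
        apply continuity_comp with (f1 := fun x => IZR z * x) (f2 := cos).
        apply continuity_mult; [apply continuity_const; intros ? ?; auto|apply derivable_continuous, derivable_id].
        apply continuity_cos. }
    rewrite Hv in HI. exact HI.
Qed.

Lemma trig_prod A B C : sin A * sin B * cos C =
  / 4 * (cos (A - B - C) + cos (A - B + C) - cos (A + B - C) - cos (A + B + C)).
Proof.
  unfold Rminus. rewrite !cos_plus, !sin_plus, !cos_neg, !sin_neg. field.
Qed.

Definition tval (a b c : nat) : R :=
  / 4 * (cval (Z.of_nat a - Z.of_nat b - Z.of_nat c) + cval (Z.of_nat a - Z.of_nat b + Z.of_nat c)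
        - cval (Z.of_nat a + Z.of_nat b - Z.of_nat c) - cval (Z.of_nat a + Z.of_nat b + Z.of_nat c)).

Lemma is_RInt_lin4 f1 f2 f3 f4 a b v1 v2 v3 v4 :
  is_RInt f1 a b v1 -> is_RInt f2 a b v2 -> is_RInt f3 a b v3 -> is_RInt f4 a b v4 ->
  is_RInt (fun x => / 4 * (f1 x + f2 x - f3 x - f4 x)) a b (/ 4 * (v1 + v2 - v3 - v4)).
Proof.
  intros H1 H2 H3 H4.
  exact (is_RInt_scal _ a b (/4) _ (is_RInt_minus _ _ a b _ _ (is_RInt_minus _ _ a b _ _ (is_RInt_plus _ _ a b _ _ H1 H2) H3) H4)).
Qed.

Lemma is_RInt_ssc (a b c : nat) :
  is_RInt (fun x => sin (INR a * x) * sin (INR b * x) * cos (INR c * x)) 0 PI (tval a b c).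
Proof.
  apply is_RInt_ext with (fun x => / 4 * (cos (IZR (Z.of_nat a - Z.of_nat b - Z.of_nat c) * x) + cos (IZR (Z.of_nat a - Z.of_nat b + Z.of_nat c) * x)
        - cos (IZR (Z.of_nat a + Z.of_nat b - Z.of_nat c) * x) - cos (IZR (Z.of_nat a + Z.of_nat b + Z.of_nat c) * x))).
  - intros x _. rewrite trig_prod. rewrite !minus_IZR, !plus_IZR, ?minus_IZR, <- !INR_IZR_INZ.
    replace (INR a * x - INR b * x - INR c * x) with ((INR a - INR b - INR c) * x) by ring.
    replace (INR a * x - INR b * x + INR c * x) with ((INR a - INR b + INR c) * x) by ring.
    replace (INR a * x + INR b * x - INR c * x) with ((INR a + INR b - INR c) * x) by ring.
    replace (INR a * x + INR b * x + INR c * x) with ((INR a + INR b + INR c) * x) by ring.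
    reflexivity.
  - apply is_RInt_lin4; apply is_RInt_cos_int.
Qed.

Lemma sq_sum a K : (sum_f_R0 a K)^2 = sum_f_R0 (fun m => sum_f_R0 (fun n => a m * a n) K) K.
Proof.
  replace ((sum_f_R0 a K)^2) with (sum_f_R0 a K * sum_f_R0 a K) by ring. rewrite scal_sum. apply sum_eq. intros i _.
  rewrite scal_sum. apply sum_eq. intros j _. ring.
Qed.

Lemma sum_mult_l c F K : c * sum_f_R0 F K = sum_f_R0 (fun i => c * F i) K.
Proof. rewrite scal_sum. apply sum_eq. intros; ring. Qed.
Lemma sum_mult_r c F K : sum_f_R0 F K * c = sum_f_R0 (fun i => F i * c) K.
Proof. rewrite Rmult_comm, scal_sum. apply sum_eq. intros; ring. Qed.

Lemma dsum_comb c d F G K :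
  c * (sum_f_R0 (fun m => sum_f_R0 (fun n => F m n) K) K + sum_f_R0 (fun m => sum_f_R0 (fun n => G m n) K) K) * d
  = sum_f_R0 (fun m => sum_f_R0 (fun n => c * (F m n + G m n) * d) K) K.
Proof.
  rewrite <- sum_plus. rewrite sum_mult_l, sum_mult_r.
  apply sum_eq. intros m _. rewrite <- sum_plus. rewrite sum_mult_l, sum_mult_r.
  apply sum_eq. intros n _. ring.
Qed.

Definition wmn q t m n := cos (INR q ^ (2*m) * t) * cos (INR q ^ (2*n) * t) + sin (INR q ^ (2*m) * t) * sin (INR q ^ (2*n) * t).
Definition Gterm q s t (J m n : nat) x := Nconst q s ^2 * (rr q s ^ m * rr q s ^ n * wmn q t m n) *
   (sin (INR (q^m) * x) * sin (INR (q^n) * x) * cos (INR J * x)).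
Definition Vterm q s t (J m n : nat) := Nconst q s ^2 * (rr q s ^ m * rr q s ^ n * wmn q t m n) * tval (q^m) (q^n) J.

Lemma PK_expand q s t K J x :
  PK q s t K x * cos (INR J * x) = sum_f_R0 (fun m => sum_f_R0 (fun n => Gterm q s t J m n x) K) K.
Proof.
  unfold PK, AK, BK. rewrite !sq_sum. rewrite dsum_comb.
  apply sum_eq. intros m _. apply sum_eq. intros n _. unfold Gterm, wmn, uA, uB. rewrite !pow_INR. ring.
Qed.

Lemma is_RInt_sumf F v K a b : (forall i, (i <= K)%nat -> is_RInt (F i) a b (v i)) ->
  is_RInt (fun x => sum_f_R0 (fun i => F i x) K) a b (sum_f_R0 v K).
Proof.
  induction K; intros H.
  - simpl. apply H. auto.
  - simpl. exact (is_RInt_plus _ _ a b _ _ (IHK (fun i Hi => H i ltac:(lia))) (H (S K) ltac:(lia))).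
Qed.

Lemma is_RInt_PK q s t K J :
  is_RInt (fun x => PK q s t K x * cos (INR J * x)) 0 PI
     (sum_f_R0 (fun m => sum_f_R0 (fun n => Vterm q s t J m n) K) K).
Proof.
  apply is_RInt_ext with (fun x => sum_f_R0 (fun m => sum_f_R0 (fun n => Gterm q s t J m n x) K) K).
  { intros x _. rewrite PK_expand. auto. }
  apply is_RInt_sumf. intros m _. apply is_RInt_sumf. intros n _.
  unfold Gterm, Vterm. apply (is_RInt_scal _ 0 PI _ _ (is_RInt_ssc (q^m) (q^n) J)).
Qed.

Lemma fsum_one F K j : (j <= K)%nat -> (forall i, (i <= K)%nat -> i <> j -> F i = 0) -> sum_f_R0 F K = F j.
Proof.
  induction K; intros Hj H.
  - simpl. assert (j = 0%nat) by lia. subst; auto.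
  - simpl. destruct (Nat.eq_dec j (S K)).
    + subst. rewrite sum_eq_R0. ring. intros n Hn. apply H; lia.
    + rewrite IHK by (try lia; intros; apply H; lia). rewrite (H (S K)) by lia. ring.
Qed.

Lemma fsum_two F K j1 j2 : (j1 <= K)%nat -> (j2 <= K)%nat -> j1 <> j2 ->
  (forall i, (i <= K)%nat -> i <> j1 -> i <> j2 -> F i = 0) -> sum_f_R0 F K = F j1 + F j2.
Proof.
  revert j1 j2. induction K; intros j1 j2 H1 H2 H12 H.
  - lia.
  - simpl. destruct (Nat.eq_dec j1 (S K)) as [E1|E1]; [|destruct (Nat.eq_dec j2 (S K)) as [E2|E2]].
    + subst j1. rewrite (fsum_one F K j2) by (try lia; intros; apply H; lia). ring.
    + subst j2. rewrite (fsum_one F K j1) by (try lia; intros; apply H; lia). ring.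
    + rewrite (IHK j1 j2) by (try lia; intros; apply H; lia). rewrite (H (S K)) by lia. ring.
Qed.

Definition kcond (k n0 : nat) := (n0 = 0 /\ 2 <= k)%nat \/ (n0 = 1 /\ 3 <= k)%nat.

Lemma NTa q k n0 m n : (2 <= q)%nat -> kcond k n0 -> (q^m <> q^n + (q^k + q^n0))%nat.
Proof.
  intros Hq [[-> Hk]|[-> Hk]]; simpl.
  - rewrite Nat.add_assoc. apply NT2; auto.
  - rewrite Nat.mul_1_r, Nat.add_assoc. apply NT2'; auto.
Qed.

Lemma NTb q k n0 m n : (2 <= q)%nat -> kcond k n0 -> (q^m + q^n = q^k + q^n0)%nat ->
  (m = k /\ n = n0) \/ (m = n0 /\ n = k).
Proof.
  intros Hq [[-> Hk]|[-> Hk]]; simpl; intros E.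
  - apply (NT1 q); auto.
  - rewrite Nat.mul_1_r in E. apply (NT1' q); auto.
Qed.

Lemma tval_eval q k n0 m n : (2 <= q)%nat -> kcond k n0 ->
  tval (q^m) (q^n) (q^k + q^n0) = if (Nat.eq_dec m k) then (if Nat.eq_dec n n0 then - PI/4 else 0)
     else if (Nat.eq_dec m n0) then (if Nat.eq_dec n k then - PI / 4 else 0) else 0.
Proof.
  intros Hq Hk. unfold tval, cval.
  pose proof (NTa q k n0 m n Hq Hk). pose proof (NTa q k n0 n m Hq Hk).
  assert (Hpos : (1 <= q^k + q^n0)%nat) by (pose proof (Nat.pow_nonzero q k ltac:(lia)); lia).
  destruct (Z.eq_dec (Z.of_nat (q ^ m) - Z.of_nat (q ^ n) - Z.of_nat (q ^ k + q ^ n0)) 0); [lia|].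
  destruct (Z.eq_dec (Z.of_nat (q ^ m) - Z.of_nat (q ^ n) + Z.of_nat (q ^ k + q ^ n0)) 0); [lia|].
  destruct (Z.eq_dec (Z.of_nat (q ^ m) + Z.of_nat (q ^ n) + Z.of_nat (q ^ k + q ^ n0)) 0); [lia|].
  assert (Hkn : k <> n0) by (destruct Hk; lia).
  destruct (Z.eq_dec (Z.of_nat (q ^ m) + Z.of_nat (q ^ n) - Z.of_nat (q ^ k + q ^ n0)) 0) as [E|E].
  - assert (E' : (q^m + q^n = q^k + q^n0)%nat) by lia.
    destruct (NTb q k n0 m n Hq Hk E') as [[-> ->]|[-> ->]].
    + destruct (Nat.eq_dec k k); [|congruence]. destruct (Nat.eq_dec n0 n0); [|congruence]. field.
    + destruct (Nat.eq_dec n0 k); [congruence|]. destruct (Nat.eq_dec n0 n0); [|congruence].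
      destruct (Nat.eq_dec k k); [|congruence]. field.
  - destruct (Nat.eq_dec m k) as [->|Hmk].
    + destruct (Nat.eq_dec n n0) as [->|]; [lia|field].
    + destruct (Nat.eq_dec m n0) as [->|]; [|field].
      destruct (Nat.eq_dec n k) as [->|]; [lia|field].
Qed.

Lemma Fcoef q s t K k n0 : (2 <= q)%nat -> kcond k n0 -> (k <= K)%nat ->
  RInt (fun x => PK q s t K x * cos (INR (q^k + q^n0) * x)) 0 PI =
  - (PI / 2) * Nconst q s ^ 2 * (rr q s ^ k * rr q s ^ n0) * wmn q t k n0.
Proof.
  intros Hq Hk HK.
  assert (Hkn : k <> n0) by (destruct Hk; lia).
  assert (Hn0 : (n0 <= K)%nat) by (destruct Hk; lia).
  apply is_RInt_unique.
  replace (- (PI / 2) * Nconst q s ^ 2 * (rr q s ^ k * rr q s ^ n0) * wmn q t k n0) with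
   (sum_f_R0 (fun m => sum_f_R0 (fun n => Vterm q s t (q ^ k + q ^ n0) m n) K) K).
  { apply is_RInt_PK. }
  rewrite (fsum_two _ K k n0); auto.
  - rewrite (fsum_one _ K n0), (fsum_one _ K k); auto.
    + unfold Vterm. rewrite !tval_eval by auto.
      destruct (Nat.eq_dec k k); [|congruence]. destruct (Nat.eq_dec n0 n0); [|congruence].
      destruct (Nat.eq_dec n0 k); [congruence|]. unfold wmn. field.
    + intros n Hn Hne. unfold Vterm. rewrite tval_eval by auto.
      destruct (Nat.eq_dec n0 k); [congruence|]. destruct (Nat.eq_dec n0 n0); [|congruence].
      destruct (Nat.eq_dec n k); [congruence|]. ring.
    + intros n Hn Hne. unfold Vterm. rewrite tval_eval by auto.
      destruct (Nat.eq_dec k k); [|congruence]. destruct (Nat.eq_dec n n0); [congruence|]. ring.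
  - intros m Hm H1 H2. apply sum_eq_R0. intros n Hn. unfold Vterm. rewrite tval_eval by auto.
    destruct (Nat.eq_dec m k); [congruence|]. destruct (Nat.eq_dec m n0); [congruence|]. ring.
Qed.

Lemma RIntR_minus f g a b : continuity f -> continuity g ->
  RInt (fun x => f x - g x) a b = RInt f a b - RInt g a b.
Proof. intros Hf Hg. apply (RInt_minus f g a b); apply ex_RInt_cont; auto. Qed.

Lemma RIntR_chasles f a b c : continuity f -> RInt f a b + RInt f b c = RInt f a c.
Proof. intros Hf. apply (RInt_Chasles f a b c); apply ex_RInt_cont; auto. Qed.

Lemma RIntR_abs_bound f a b M : a <= b -> continuity f -> (forall x, a <= x <= b -> Rabs (f x) <= M) ->
  Rabs (RInt f a b) <= (b - a) * M.
Proof. intros Hab Hf H. apply abs_RInt_le_const; auto. apply ex_RInt_cont; auto. Qed.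

Lemma RIntR_shift f h a b : continuity f -> RInt (fun y => f (y + h)) a b = RInt f (a + h) (b + h).
Proof.
  intros Hf. replace (a + h) with (1 * a + h) by ring. replace (b + h) with (1 * b + h) by ring.
  rewrite <- (RInt_comp_lin f 1 h a b) by (apply ex_RInt_cont; auto).
  apply RInt_ext. intros x _. unfold scal; simpl; unfold mult; simpl. rewrite !Rmult_1_l. auto.
Qed.

Lemma RIntR_le f g a b : a <= b -> continuity f -> continuity g -> (forall x, a <= x <= b -> f x <= g x) ->
  RInt f a b <= RInt g a b.
Proof. intros Hab Hf Hg H. apply RInt_le; auto; try apply ex_RInt_cont; auto. intros; apply H; lra. Qed.

Lemma cont_cosJ J : continuity (fun x => cos (J * x)).
Proof.
  apply continuity_comp with (f1 := fun x => J * x) (f2 := cos).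
  apply continuity_mult; [apply continuity_const; intros ? ?; auto|apply derivable_continuous, derivable_id].
  apply continuity_cos.
Qed.

Lemma cont_shift f h : continuity f -> continuity (fun x => f (x + h)).
Proof.
  intros Hc. apply continuity_comp with (f1 := fun x => x + h) (f2 := f); auto.
  apply continuity_plus; [apply derivable_continuous, derivable_id|apply continuity_const; intros ? ?; auto].
Qed.

Lemma shift_lemma f Bd J : continuity f -> (forall x, Rabs (f x) <= Bd) -> 0 < J -> PI / J <= PI ->
  2 * Rabs (RInt (fun x => f x * cos (J * x)) 0 PI) - 4 * (PI / J) * Bd <=
  RInt (fun x => Rabs (f (x + PI / J) - f x)) 0 (PI - PI / J).
Proof.
  intros Hc HB HJ HhP. set (h := PI / J) in *.
  assert (Hpi : 0 < PI) by apply PI_RGT_0.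
  assert (Hh : 0 < h) by (unfold h; apply Rdiv_lt_0_compat; auto).
  assert (HJh : J * h = PI) by (unfold h; field; lra).
  set (F := fun x => f x * cos (J * x)).
  assert (HF : continuity F) by (apply continuity_mult; auto; apply cont_cosJ).
  assert (HFb : forall x, Rabs (F x) <= Bd).
  { intros x. unfold F. rewrite Rabs_mult. pose proof (Rabs_le (cos (J*x)) 1 (COS_bound _)).
    pose proof (HB x). pose proof (Rabs_pos (f x)). pose proof (Rabs_pos (cos (J * x))). nra. }
  assert (HBd : 0 <= Bd) by (pose proof (HB 0); pose proof (Rabs_pos (f 0)); lra).
  set (G := fun x => f (x + h) * cos (J * x)).
  assert (HG : continuity G) by (apply continuity_mult; [apply cont_shift; auto|apply cont_cosJ]).
  assert (EG : RInt G 0 PI = - RInt F h (PI + h)).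
  { transitivity (RInt (fun y => - F (y + h)) 0 PI).
    - apply RInt_ext. intros x _. unfold G, F. change (f (x + h) * cos (J * x) = - (f (x + h) * cos (J * (x + h)))). rewrite Rmult_plus_distr_l, HJh, neg_cos. ring.
    - rewrite (RInt_ext _ (fun y => opp (F (y + h)))) by (intros; reflexivity).
      rewrite (RInt_opp (fun y => F (y + h))) by (apply ex_RInt_cont; apply cont_shift; auto).
      rewrite RIntR_shift by auto. rewrite !Rplus_0_l. reflexivity. }
  set (D := RInt (fun x => f x * cos (J * x) - f (x + h) * cos (J * x)) 0 PI).
  assert (ED : D = RInt F 0 PI - RInt G 0 PI).
  { unfold D. rewrite <- RIntR_minus by auto. apply RInt_ext. intros; unfold F, G; auto. }
  assert (C1 : RInt F 0 h + RInt F h PI = RInt F 0 PI) by (apply RIntR_chasles; auto).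
  assert (C2 : RInt F h PI + RInt F PI (PI + h) = RInt F h (PI + h)) by (apply RIntR_chasles; auto).
  assert (B1 : Rabs (RInt F 0 h) <= (h - 0) * Bd) by (apply RIntR_abs_bound; auto; lra).
  assert (B2 : Rabs (RInt F PI (PI + h)) <= (PI + h - PI) * Bd) by (apply RIntR_abs_bound; auto; lra).
  set (g := fun x => Rabs (f (x + h) - f x)).
  assert (Hg : continuity g) by (apply cont_shift_abs; auto).
  assert (BD : Rabs D <= RInt g 0 PI).
  { unfold D. eapply Rle_trans.
    - apply abs_RInt_le; [lra|]. apply ex_RInt_cont. apply continuity_minus; auto.
    - apply RIntR_le; [lra| |auto|].
      + apply continuity_comp with (f1 := fun x => f x * cos (J * x) - f (x + h) * cos (J * x)) (f2 := Rabs).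
        apply continuity_minus; auto. apply Rcontinuity_abs.
      + intros x _. unfold g. rewrite <- Rmult_minus_distr_r, Rabs_mult, Rabs_minus_sym.
        pose proof (Rabs_le (cos (J*x)) 1 (COS_bound _)). pose proof (Rabs_pos (f (x + h) - f x)). nra. }
  assert (Cg : RInt g 0 (PI - h) + RInt g (PI - h) PI = RInt g 0 PI) by (apply RIntR_chasles; auto).
  assert (Bg : Rabs (RInt g (PI - h) PI) <= (PI - (PI - h)) * (2 * Bd)).
  { apply RIntR_abs_bound; auto; [lra|]. intros x _. unfold g. rewrite Rabs_Rabsolu.
    eapply Rle_trans; [apply Rabs_triang|]. rewrite Rabs_Ropp. pose proof (HB (x+h)). pose proof (HB x). lra. }
  assert (E2 : 2 * RInt F 0 PI = D + RInt F 0 h - RInt F PI (PI + h)).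
  { rewrite ED, EG. lra. }
  apply Rabs_le_between in B1. apply Rabs_le_between in B2. apply Rabs_le_between in Bg.
  apply Rabs_le_between in BD.
  destruct (Rle_dec 0 (RInt F 0 PI)).
  - rewrite Rabs_pos_eq by auto. fold F. lra.
  - rewrite Rabs_left by lra. fold F. lra.
Qed.

Lemma pow2k_int q k : exists m : Z, INR q ^ (2 * k) - 1 = IZR m * (INR q ^ 2 - 1).
Proof.
  induction k as [|k [m Hm]].
  - exists 0%Z. simpl. ring.
  - exists (Z.of_nat (q * q) * m + 1)%Z. rewrite plus_IZR, mult_IZR, <- INR_IZR_INZ, mult_INR.
    replace (2 * S k)%nat with (2 + 2 * k)%nat by lia. rewrite pow_add.
    replace (INR q ^ 2 * INR q ^ (2 * k) - 1) with (INR q ^ 2 * (INR q ^ (2 * k) - 1) + (INR q ^ 2 - 1)) by ring.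
    rewrite Hm. simpl. ring.
Qed.

Lemma cos_intPI (z : Z) : Rabs (cos (IZR z * PI)) = 1.
Proof.
  assert (sin (IZR z * PI) = 0) by (apply sin_eq_0_1; exists z; auto).
  pose proof (sin2_cos2 (IZR z * PI)). rewrite H in H0. unfold Rsqr in H0.
  assert (cos (IZR z * PI) * cos (IZR z * PI) = 1) by lra.
  destruct (Rle_dec 0 (cos (IZR z * PI))).
  - rewrite Rabs_pos_eq by auto. nra.
  - rewrite Rabs_left by lra. nra.
Qed.

Lemma wmn_cos q t m n : wmn q t m n = cos (INR q ^ (2*m) * t - INR q ^ (2*n) * t).
Proof. unfold wmn. rewrite cos_minus. ring. Qed.

Lemma wlow q t : (2 <= q)%nat -> exists c, 0 < c /\ forall k, (3 <= k)%nat ->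
  exists n0, kcond k n0 /\ c <= Rabs (wmn q t k n0).
Proof.
  intros Hq. set (w := (INR q ^ 2 - 1) * t).
  destruct (Req_dec (sin w) 0) as [Hs|Hs].
  - apply sin_eq_0_0 in Hs as [z Hz]. exists 1. split; [lra|]. intros k Hk.
    exists 0%nat. split; [left; split; lia|]. rewrite wmn_cos.
    destruct (pow2k_int q k) as [m Hm]. simpl (2 * 0)%nat. rewrite pow_O.
    replace (INR q ^ (2 * k) * t - 1 * t) with ((INR q ^ (2 * k) - 1) * t) by ring.
    rewrite Hm, Rmult_assoc. fold w. rewrite Hz, <- Rmult_assoc, <- mult_IZR, cos_intPI. lra.
  - exists (Rabs (sin w) / 3). split. { apply Rdiv_lt_0_compat; [apply Rabs_pos_lt; auto|lra]. }
    intros k Hk.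
    set (u := INR q ^ (2 * k) * t - INR q ^ (2 * 0) * t).
    set (v := INR q ^ (2 * k) * t - INR q ^ (2 * 1) * t).
    assert (Huv : v = u - w) by (unfold u, v, w; simpl; ring).
    destruct (Rle_dec (Rabs (sin w) / 3) (Rabs (cos u))) as [Hu|Hu].
    { exists 0%nat. split; [left; split; lia|]. rewrite wmn_cos. fold u. auto. }
    exists 1%nat. split; [right; split; lia|]. rewrite wmn_cos. fold v.
    destruct (Rle_dec (Rabs (sin w) / 3) (Rabs (cos v))) as [Hv|Hv]; auto. exfalso.
    rewrite Huv, cos_minus in Hv.
    set (cu := cos u) in *. set (su := sin u) in *. set (cw := cos w) in *. set (sw := sin w) in *.
    assert (E1 : su * su + cu * cu = 1) by (pose proof (sin2_cos2 u); unfold Rsqr in *; fold cu su in H; lra).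
    assert (E2 : cw * cw <= 1) by (pose proof (sin2_cos2 w); unfold Rsqr in *; fold cw sw in H; nra).
    assert (Hsw : sw * sw <= 1) by (pose proof (sin2_cos2 w); unfold Rsqr in *; fold cw sw in H; nra).
    set (c := Rabs sw / 3) in *.
    assert (Hc2 : c * c = sw * sw / 9).
    { unfold c. replace (Rabs sw / 3 * (Rabs sw / 3)) with (Rabs sw * Rabs sw / 9) by field.
      rewrite <- Rabs_mult, Rabs_pos_eq by nra. reflexivity. }
    apply Rnot_le_lt in Hu. apply Rnot_le_lt in Hv.
    assert (Hcu : cu * cu < c * c).
    { assert (Rabs cu * Rabs cu < c * c) by (pose proof (Rabs_pos cu); nra). rewrite <- Rabs_mult in H.
      rewrite Rabs_pos_eq in H by nra. auto. }
    assert (Hcv : (cu * cw + su * sw) * (cu * cw + su * sw) < c * c).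
    { set (y := cu * cw + su * sw) in *.
      assert (Rabs y * Rabs y < c * c) by (pose proof (Rabs_pos y); nra). rewrite <- Rabs_mult in H.
      rewrite Rabs_pos_eq in H by nra. auto. }
    assert (Hcw2 : (cu * cw) * (cu * cw) < c * c) by nra.
    (* |su sw| <= |y| + |cu cw| < 2c *)
    assert (Hsusw : (su * sw) * (su * sw) < 4 * (c * c)).
    { assert (A1 : Rabs (cu * cw) < c).
      { apply Rnot_le_lt. intros HH. assert (c <= Rabs (cu*cw)) by auto.
        assert (0 <= c) by (unfold c; pose proof (Rabs_pos sw); lra).
        assert (c * c <= Rabs (cu * cw) * Rabs (cu * cw)) by nra.
        rewrite <- Rabs_mult, Rabs_pos_eq in H1 by nra. lra. }
      assert (A2 : Rabs (cu * cw + su * sw) < c).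
      { apply Rnot_le_lt. intros HH.
        assert (0 <= c) by (unfold c; pose proof (Rabs_pos sw); lra).
        assert (c * c <= Rabs (cu * cw + su * sw) * Rabs (cu * cw + su * sw)) by nra.
        rewrite <- Rabs_mult, Rabs_pos_eq in H0 by nra. lra. }
      assert (A3 : Rabs (su * sw) < 2 * c).
      { replace (su * sw) with ((cu * cw + su * sw) + - (cu * cw)) by ring.
        eapply Rle_lt_trans; [apply Rabs_triang|]. rewrite Rabs_Ropp. lra. }
      pose proof (Rabs_pos (su * sw)). assert (Rabs (su*sw) * Rabs (su*sw) < 4 * (c*c)) by nra.
      rewrite <- Rabs_mult, Rabs_pos_eq in H0 by nra. auto. }
    assert (Hsw0 : 0 < sw * sw).
    { assert (sw <> 0) by auto. nra. }
    (* su^2 > 1 - c^2 >= 8/9 *)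
    assert (Hsu : su * su * (sw * sw) < 4 * (sw * sw / 9)).
    { rewrite <- Hc2. replace (su * su * (sw * sw)) with ((su * sw) * (su * sw)) by ring. auto. }
    assert (su * su > 1 - sw * sw / 9) by lra.
    assert ((1 - sw * sw / 9) * (sw * sw) < 4 * (sw * sw / 9)) by nra.
    nra.
Qed.

Lemma Nsq_pos q s : (2 <= q)%nat -> s < 2 -> 0 < Nconst q s ^ 2.
Proof.
  intros Hq Hs. pose proof (rr_bounds q s Hq Hs). unfold Nconst.
  assert (E : Rpower (INR q) (2 * (s - 2)) = rr q s ^ 2).
  { unfold rr. rewrite <- Rpower_pow by (unfold Rpower; apply exp_pos). rewrite Rpower_mult. f_equal. simpl. ring. }
  rewrite E. assert (0 < 2 / PI * (1 - rr q s ^ 2)).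
  { apply Rmult_lt_0_compat. apply Rdiv_lt_0_compat; [lra|apply PI_RGT_0]. nra. }
  rewrite <- Rsqr_pow2, Rsqr_sqrt by lra. auto.
Qed.

Lemma rho_lt1 q s th : (2 <= q)%nat -> th < 2 - s -> rho q s th < 1.
Proof.
  intros Hq Hth. unfold rho, rr. rewrite <- Rpower_plus.
  rewrite <- (Rpower_O (INR q)) by (pose proof (INRq_gt1 q Hq); lra).
  apply Rpower_lt; [apply INRq_gt1; auto|lra].
Qed.

Lemma pow_ge_lin Q k : 2 <= Q -> INR k + 1 <= Q ^ k.
Proof.
  intros HQ. induction k. simpl; lra. rewrite S_INR. simpl.
  assert (0 <= INR k) by apply pos_INR. nra.
Qed.

Lemma exist_k Q X : 2 <= Q -> 1 < X -> exists k, (1 <= k)%nat /\ Q ^ (k - 1) < X /\ X <= Q ^ k.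
Proof.
  intros HQ HX.
  assert (Hn : exists n, X <= Q ^ n).
  { destruct (archimed X) as [A _]. exists (Z.to_nat (up X)).
    pose proof (pow_ge_lin Q (Z.to_nat (up X)) HQ). rewrite INR_IZR_INZ, Z2Nat.id in H. lra.
    apply le_IZR. lra. }
  destruct Hn as [n Hn].
  assert (forall m, X <= Q ^ m -> exists k, (1 <= k)%nat /\ Q ^ (k - 1) < X /\ X <= Q ^ k).
  { clear n Hn. intros m. induction m as [|n0 IHn0]; intros Hn.
    - simpl in Hn. lra.
    - destruct (Rle_dec X (Q ^ n0)) as [H|H].
      + apply IHn0; auto.
      + exists (S n0). split; [lia|]. split; auto. simpl (S n0 - 1)%nat. rewrite Nat.sub_0_r. lra. }
  apply (H n Hn).
Qed.

Lemma chooseM d : 0 < d < 1 -> exists M : nat, INR M * d + d <= PI /\ PI - 2 * d <= INR M * d.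
Proof.
  intros Hd. pose proof PI_RGT_0. pose proof PI2_3_2.
  set (z := flo (PI / d)). destruct (flo_spec (PI / d)) as [F1 F2]. fold z in F1, F2.
  assert (Hpd : 1 < PI / d).
  { apply Rmult_lt_reg_r with d; [lra|]. unfold Rdiv. rewrite Rmult_assoc, Rinv_l by lra. lra. }
  assert (Hz : (0 < z)%Z) by (apply lt_IZR; simpl; lra).
  exists (Z.to_nat z - 1)%nat.
  assert (E : INR (Z.to_nat z - 1) = IZR z - 1).
  { rewrite minus_INR by lia. rewrite INR_IZR_INZ, Z2Nat.id by lia. simpl. auto. }
  rewrite E. split.
  - replace ((IZR z - 1) * d + d) with (IZR z * d) by ring.
    apply Rmult_le_reg_r with (/ d). apply Rinv_0_lt_compat; lra.
    rewrite Rmult_assoc, Rinv_r by lra. lra.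
  - assert (PI / d - 2 <= IZR z - 1) by lra.
    apply Rmult_le_compat_r with (r := d) in H1; [|lra].
    unfold Rdiv in H1. rewrite Rmult_minus_distr_r, Rmult_assoc, Rinv_l in H1 by lra. lra.
Qed.

Lemma Rpower_inv d a : 0 < d -> Rpower (/ d) a = Rpower d (- a).
Proof. intros Hd. unfold Rpower. rewrite ln_Rinv by auto. f_equal. ring. Qed.

Lemma Rpower_2 d : 0 < d -> Rpower d 2 = d * d.
Proof. intros Hd. replace 2 with (INR 2) by (simpl; ring). rewrite Rpower_pow by auto. simpl. ring. Qed.

Lemma rr_pow q s k : (2 <= q)%nat -> rr q s ^ k = Rpower (INR q ^ k) (s - 2).
Proof.
  intros Hq. pose proof (INRq_gt1 q Hq). unfold rr.
  rewrite <- Rpower_pow by (unfold Rpower; apply exp_pos). rewrite <- Rpower_pow by lra.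
  rewrite !Rpower_mult. f_equal. ring.
Qed.

Lemma approx_int q s t K (J : nat) th : (2 <= q)%nat -> s < 2 -> 0 < th <= 1 -> rho q s th < 1 ->
  Rabs (RInt (fun x => Pdens q s x t * cos (INR J * x)) 0 PI - RInt (fun x => PK q s t K x * cos (INR J * x)) 0 PI)
   <= PI * (Nconst q s ^ 2 * (4 * Sb q s ^ 2 * rr q s ^ S K)).
Proof.
  intros Hq Hs Hth Hr.
  assert (Hc : continuity (fun x => Pdens q s x t)) by (eapply P_cont; eauto).
  assert (HPK : ex_RInt (fun x => PK q s t K x * cos (INR J * x)) 0 PI).
  { eexists. apply is_RInt_PK. }
  assert (HP : ex_RInt (fun x => Pdens q s x t * cos (INR J * x)) 0 PI).
  { apply ex_RInt_cont. apply continuity_mult; auto. apply cont_cosJ. }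
  assert (E : RInt (fun x => Pdens q s x t * cos (INR J * x) - PK q s t K x * cos (INR J * x)) 0 PI =
     RInt (fun x => Pdens q s x t * cos (INR J * x)) 0 PI - RInt (fun x => PK q s t K x * cos (INR J * x)) 0 PI)
    by exact (RInt_minus _ _ 0 PI HP HPK).
  rewrite <- E.
  replace PI with (PI - 0) at 2 by ring.
  apply abs_RInt_le_const. pose proof PI_RGT_0; lra.
  - apply (ex_RInt_minus _ _ 0 PI HP HPK).
  - intros x _. change (Rabs (Pdens q s x t * cos (INR J * x) - PK q s t K x * cos (INR J * x))
       <= Nconst q s ^ 2 * (4 * Sb q s ^ 2 * rr q s ^ S K)).
    rewrite <- Rmult_minus_distr_r, Rabs_mult.
    pose proof (P_PK q s t K x Hq Hs). pose proof (abs_cos_le1 (INR J * x)).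
    pose proof (Rabs_pos (Pdens q s x t - PK q s t K x)). pose proof (Rabs_pos (cos (INR J * x))). nra.
Qed.

Lemma Rpower_dec_base a b e : 0 < a <= b -> e < 0 -> Rpower b e <= Rpower a e.
Proof.
  intros Hab He. replace e with (- (- e)) by ring. rewrite (Rpower_Ropp b (-e)), (Rpower_Ropp a (-e)).
  apply Rinv_le_contravar. apply Rpower_pos. apply Rle_Rpower_l; lra.
Qed.

Lemma lower_gt1 q s t : (2<=q)%nat -> 1 < s < 2 -> exists clo d1, 0 < clo /\ 0 < d1 /\
  forall d n, 0 < d < d1 -> has_card (box_meets (Gr (fun x => Pdens q s x t)) d) n ->
    clo * Rpower (/ d) s <= INR n.
Proof.
  intros Hq Hs.
  assert (HQ : 2 <= INR q) by (apply le_INR in Hq; simpl in Hq; lra).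
  set (Q := INR q) in *.
  pose proof (rr_bounds q s Hq ltac:(lra)) as Hr. set (r := rr q s) in *.
  pose proof (Nsq_pos q s Hq ltac:(lra)) as HN. set (N2 := Nconst q s ^ 2) in *.
  pose proof (Sb_pos q s Hq ltac:(lra)) as HSb. set (Sb0 := Sb q s) in *.
  set (Bd := 2 * N2 * Sb0 ^ 2).
  assert (HBd : 0 < Bd) by (unfold Bd; apply Rmult_lt_0_compat; [lra|apply pow_lt; lra]).
  set (th0 := (2 - s) / 2).
  assert (Hth0 : 0 < th0 <= 1) by (unfold th0; lra).
  assert (Hrho : rho q s th0 < 1) by (apply rho_lt1; auto; unfold th0; lra).
  set (f := fun x => Pdens q s x t).
  assert (Hc : continuity f) by (unfold f; eapply P_cont; eauto; lra).
  assert (HB : forall x, Rabs (f x) <= Bd) by (intros x; unfold f, Bd, N2, Sb0; apply P_bound; auto; lra).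
  destruct (wlow q t Hq) as [c [Hc0 Hw]].
  assert (Hy : 0 < c / (16 * Sb0 ^ 2)) by (apply Rdiv_lt_0_compat; [lra|apply Rmult_lt_0_compat; [lra|apply pow_lt; lra]]).
  destruct (pow_lt_1_zero r ltac:(rewrite Rabs_pos_eq; lra) _ Hy) as [L HL].
  specialize (HL L (Nat.le_refl L)). rewrite Rabs_pos_eq in HL by (apply pow_le; lra).
  set (C1 := Rpower (Q * PI) (s - 2)).
  assert (HC1 : 0 < C1) by apply Rpower_pos.
  set (c3 := PI / 2 * N2 * c * r * C1).
  assert (Hc3 : 0 < c3).
  { unfold c3. pose proof PI_RGT_0. apply Rmult_lt_0_compat; [|auto]. apply Rmult_lt_0_compat; [|lra]. apply Rmult_lt_0_compat; [|lra]. apply Rmult_lt_0_compat; [|lra]. lra. }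
  set (Y := Rpower (16 * Bd / c3) (/ (s - 1))).
  assert (HY : 0 < Y) by apply Rpower_pos.
  pose proof PI_RGT_0 as HPI. pose proof PI2_3_2 as HPI3.
  exists (c3 / 4), (Rmin (Rmin 1 (PI / (Q * Q))) (/ Y)).
  split; [lra|]. split.
  { apply Rmin_glb_lt; [apply Rmin_glb_lt|]; try lra.
    apply Rdiv_lt_0_compat; nra. apply Rinv_0_lt_compat; auto. }
  intros d n [Hd Hd1] Hn.
  assert (Hd1a : d < 1) by (eapply Rlt_le_trans; [apply Hd1|]; eapply Rle_trans; [apply Rmin_l|apply Rmin_l]).
  assert (Hd1b : d < PI / (Q * Q)) by (eapply Rlt_le_trans; [apply Hd1|]; eapply Rle_trans; [apply Rmin_l|apply Rmin_r]).
  assert (Hd1c : d < / Y) by (eapply Rlt_le_trans; [apply Hd1|]; apply Rmin_r).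
  set (X := PI / d).
  assert (HX : Q * Q < X).
  { assert (A : d * (Q * Q) < PI).
    { apply Rmult_lt_compat_r with (r := Q * Q) in Hd1b; [|nra].
      replace (PI / (Q * Q) * (Q * Q)) with PI in Hd1b by (field; nra). auto. }
    unfold X. replace (Q * Q) with (d * (Q * Q) / d) by (field; lra).
    unfold Rdiv. apply Rmult_lt_compat_r; auto. apply Rinv_0_lt_compat; auto. }
  destruct (exist_k Q X HQ ltac:(nra)) as [k [Hk1 [Hk2 Hk3]]].
  assert (Hk : (3 <= k)%nat).
  { destruct (le_lt_dec 3 k); auto. exfalso.
    assert (Q ^ k <= Q ^ 2) by (apply Rle_pow; lra || lia). simpl in H. lra. }
  destruct (Hw k Hk) as [n0 [Hkc Hwn]].
  set (J := (q ^ k + q ^ n0)%nat).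
  assert (HJ : INR J = Q ^ k + Q ^ n0) by (unfold J; rewrite plus_INR, !pow_INR; auto).
  assert (HQn0 : 0 < Q ^ n0) by (apply pow_lt; lra).
  assert (HJX : X <= INR J) by lra.
  assert (HJpos : 0 < INR J) by nra.
  set (h := PI / INR J).
  assert (Hh : 0 < h <= d).
  { unfold h. split. apply Rdiv_lt_0_compat; lra.
    unfold X in HJX. apply Rmult_le_reg_r with (INR J); auto. unfold Rdiv. rewrite Rmult_assoc, Rinv_l by lra.
    apply Rmult_le_reg_r with (/ d). apply Rinv_0_lt_compat; auto.
    replace (d * INR J * / d) with (INR J) by (field; lra). lra. }
  assert (HhPI : h <= PI) by lra.
  set (K := (k + L)%nat).
  assert (Fc := Fcoef q s t K k n0 Hq Hkc ltac:(unfold K; lia)).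
  assert (Ap := approx_int q s t K J th0 Hq ltac:(lra) Hth0 Hrho).
  assert (Sh := shift_lemma f Bd (INR J) Hc HB HJpos HhPI). fold h in Sh.
  destruct (chooseM d ltac:(lra)) as [M [HM1 HM2]].
  destruct (box_card_lower f d h n M Hc Hd Hh HM1 Hn) as [_ Low].
  set (g := fun x => Rabs (f (x + h) - f x)).
  assert (Hg : continuity g) by (apply cont_shift_abs; auto).
  assert (Cg : RInt g 0 (INR M * d) + RInt g (INR M * d) (PI - h) = RInt g 0 (PI - h)) by (apply RIntR_chasles; auto).
  assert (Bg : Rabs (RInt g (INR M * d) (PI - h)) <= (PI - h - INR M * d) * (2 * Bd)).
  { apply RIntR_abs_bound; auto; [lra|]. intros x _. unfold g. rewrite Rabs_Rabsolu.
    eapply Rle_trans; [apply Rabs_triang|]. rewrite Rabs_Ropp. pose proof (HB (x+h)). pose proof (HB x). lra. }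
  apply Rabs_le_between in Bg.
  fold g in Sh. unfold f in Sh. fold N2 r Sb0 in Fc, Ap.
  fold J in Fc. fold g in Low.
  set (I := RInt (fun x => Pdens q s x t * cos (INR J * x)) 0 PI) in *.
  set (IK := RInt (fun x => PK q s t K x * cos (INR J * x)) 0 PI) in *.
  set (rk := r ^ k) in *.
  assert (Hrk : 0 < rk) by (unfold rk; apply pow_lt; lra).
  assert (Hrn0 : r <= r ^ n0) by (destruct Hkc as [[-> _]|[-> _]]; simpl; lra).
  assert (HIK : (PI / 2) * N2 * rk * r * c <= Rabs IK).
  { rewrite Fc. replace (- (PI / 2) * N2 * (rk * r ^ n0) * wmn q t k n0) with (- ((PI / 2 * N2 * (rk * r ^ n0)) * wmn q t k n0)) by ring.
    rewrite Rabs_Ropp, Rabs_mult, Rabs_pos_eq.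
    - assert (0 <= PI / 2 * N2 * rk) by (apply Rmult_le_pos; [apply Rmult_le_pos|]; lra).
      assert (PI / 2 * N2 * rk * r <= PI / 2 * N2 * rk * r ^ n0) by (apply Rmult_le_compat_l; auto).
      assert (PI / 2 * N2 * rk * r * c <= PI / 2 * N2 * rk * r ^ n0 * c) by (apply Rmult_le_compat_r; lra).
      assert (PI / 2 * N2 * rk * r ^ n0 * c <= PI / 2 * N2 * rk * r ^ n0 * Rabs (wmn q t k n0)).
      { apply Rmult_le_compat_l; auto. apply Rmult_le_pos; lra. }
      lra.
    - apply Rmult_le_pos; [apply Rmult_le_pos; lra|]. apply Rmult_le_pos; [lra|]. apply pow_le; lra. }
  assert (HE : PI * (N2 * (4 * Sb0 ^ 2 * r ^ S K)) <= (PI / 4) * N2 * rk * r * c).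
  { replace (S K) with ((k + 1) + L)%nat by (unfold K; lia). rewrite !pow_add. fold rk.
    assert (E : PI / 4 * N2 * rk * r * c = PI * (N2 * (4 * Sb0 ^ 2 * (rk * r ^ 1 * (c / (16 * Sb0 ^ 2)))))) by (field; repeat split; try (intro; nra); lra).
    rewrite E. apply Rmult_le_compat_l; [lra|]. apply Rmult_le_compat_l; [lra|].
    apply Rmult_le_compat_l; [nra|]. apply Rmult_le_compat_l; [|lra].
    apply Rmult_le_pos; [lra|]. simpl; lra. }
  assert (HI : (PI / 4) * N2 * rk * r * c <= Rabs I).
  { assert (Rabs IK <= Rabs I + Rabs (I - IK)).
    { replace IK with (I - (I - IK)) at 1 by ring. eapply Rle_trans; [apply Rabs_triang|]. rewrite Rabs_Ropp. lra. }
    lra. }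
  assert (Hg1 : 2 * ((PI / 4) * N2 * rk * r * c) - 4 * d * Bd <= RInt g 0 (PI - h)).
  { assert (4 * h * Bd <= 4 * d * Bd) by (apply Rmult_le_compat_r; lra). lra. }
  assert (Hg2 : RInt g 0 (PI - h) <= 2 * d * d * INR n + 4 * d * Bd).
  { assert ((PI - h - INR M * d) * (2 * Bd) <= (2 * d) * (2 * Bd)) by (apply Rmult_le_compat_r; lra). lra. }
  set (Z2 := Rpower d (2 - s)).
  assert (HZ2 : 0 < Z2) by apply Rpower_pos.
  assert (Hrk2 : C1 * Z2 <= rk).
  { unfold rk, r. rewrite rr_pow by auto. fold Q.
    assert (HQk : Q ^ k <= Q * X).
    { replace k with (S (k - 1)) at 1 by lia. simpl. apply Rmult_le_compat_l; lra. }
    eapply Rle_trans; [|apply (Rpower_dec_base (Q ^ k) (Q * X)); [split; [apply pow_lt; lra|auto]|lra]].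
    unfold X. replace (Q * (PI / d)) with ((Q * PI) * / d) by (field; lra).
    rewrite <- Rpower_mult_distr by (try apply Rinv_0_lt_compat; nra).
    unfold C1, Z2. rewrite Rpower_inv by auto. replace (- (s - 2)) with (2 - s) by ring. lra. }
  assert (F1 : Rpower (/ d) s * (d * d) = Z2).
  { unfold Z2. rewrite Rpower_inv by auto. rewrite <- Rpower_2 by auto. rewrite <- Rpower_plus. f_equal. ring. }
  assert (F2 : Rpower (/ d) (s - 1) * d = Z2).
  { unfold Z2. rewrite Rpower_inv by auto. rewrite <- (Rpower_1 d) at 2 by auto. rewrite <- Rpower_plus. f_equal. ring. }
  assert (F3 : 16 * Bd / c3 <= Rpower (/ d) (s - 1)).
  { replace (16 * Bd / c3) with (Rpower Y (s - 1)).
    - apply Rle_Rpower_l; [lra|]. split; auto. rewrite <- (Rinv_inv Y). apply Rinv_le_contravar; [lra|lra].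
    - unfold Y. rewrite Rpower_mult. rewrite Rinv_l by (intro; lra). rewrite Rpower_1. auto.
      apply Rdiv_lt_0_compat; lra. }
  assert (F4 : 16 * Bd * d <= c3 * Z2).
  { rewrite <- F2. apply Rmult_le_compat_r with (r := d) in F3; [|lra].
    apply Rmult_le_compat_l with (r := c3) in F3; [|lra].
    replace (c3 * (16 * Bd / c3 * d)) with (16 * Bd * d) in F3 by (field; lra). lra. }
  assert (W : c3 * Z2 <= 2 * (PI / 4 * N2 * rk * r * c)).
  { unfold c3. replace (2 * (PI / 4 * N2 * rk * r * c)) with ((PI / 2 * N2 * c * r) * rk) by field.
    replace (PI / 2 * N2 * c * r * C1 * Z2) with ((PI / 2 * N2 * c * r) * (C1 * Z2)) by ring.
    apply Rmult_le_compat_l; auto. apply Rmult_le_pos; [|lra]. apply Rmult_le_pos; [|lra]. apply Rmult_le_pos; lra. }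
  assert (Fin : c3 * Z2 / 2 <= 2 * d * d * INR n) by lra.
  rewrite <- F1 in Fin.
  apply Rmult_le_reg_r with (d * d); [nra|].
  replace (c3 / 4 * Rpower (/ d) s * (d * d)) with (c3 * (Rpower (/ d) s * (d * d)) / 4) by field. lra.
Qed.

Lemma lnle x y : 0 < x -> x <= y -> ln x <= ln y.
Proof. intros Hx Hxy. destruct (Req_dec x y). subst; lra. left; apply ln_increasing; lra. Qed.

Lemma ln_Rpower a b : 0 < a -> ln (Rpower a b) = b * ln a.
Proof. intros Ha. unfold Rpower. rewrite ln_exp. auto. Qed.

Lemma ratio_lemma D eps eta clo CU d (n : nat) : 0 < d < 1 -> 0 < clo -> 0 < CU -> 0 <= eta <= eps / 2 -> 0 < eps ->
  clo * Rpower (/ d) D <= INR n -> INR n <= CU * Rpower (/ d) (D + eta) ->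
  2 * (Rabs (ln CU) + Rabs (ln clo)) / eps + 1 < ln (/ d) ->
  Rabs (ln (INR n) / ln (1 / d) - D) < eps.
Proof.
  intros Hd Hclo HCU Heta Heps Hlo Hup HL.
  unfold Rdiv at 2. rewrite Rmult_1_l. set (L := ln (/ d)) in *.
  assert (HL0 : 0 < L).
  { assert (0 <= 2 * (Rabs (ln CU) + Rabs (ln clo)) / eps).
    { apply Rmult_le_pos; [pose proof (Rabs_pos (ln CU)); pose proof (Rabs_pos (ln clo)); lra|left; apply Rinv_0_lt_compat; auto]. }
    lra. }
  assert (Hid : 0 < / d) by (apply Rinv_0_lt_compat; lra).
  assert (Hn : 0 < INR n) by (eapply Rlt_le_trans; [|apply Hlo]; apply Rmult_lt_0_compat; auto; apply Rpower_pos).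
  apply lnle in Hlo; [|apply Rmult_lt_0_compat; auto; apply Rpower_pos].
  apply lnle in Hup; auto.
  rewrite ln_mult, ln_Rpower in Hlo by (auto; apply Rpower_pos).
  rewrite ln_mult, ln_Rpower in Hup by (auto; apply Rpower_pos).
  fold L in Hlo, Hup.
  assert (E : ln (INR n) / L - D = (ln (INR n) - D * L) / L) by (field; lra).
  rewrite E. apply Rabs_def1.
  - apply Rmult_lt_reg_r with L; auto. unfold Rdiv. rewrite Rmult_assoc, Rinv_l, Rmult_1_r by lra.
    assert (Rabs (ln CU) * 2 < eps * L).
    { assert (2 * Rabs (ln CU) / eps < L).
      { eapply Rle_lt_trans; [|apply HL].
        assert (0 <= 2 * Rabs (ln clo) / eps) by (apply Rmult_le_pos; [pose proof (Rabs_pos (ln clo)); lra|left; apply Rinv_0_lt_compat; auto]).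
        replace (2 * (Rabs (ln CU) + Rabs (ln clo)) / eps) with (2 * Rabs (ln CU) / eps + 2 * Rabs (ln clo) / eps) by (field; lra). lra. }
      apply Rmult_lt_compat_r with (r := eps) in H; auto. unfold Rdiv in H. rewrite Rmult_assoc, Rinv_l, Rmult_1_r in H by lra. lra. }
    pose proof (Rle_abs (ln CU)). assert (eta * L <= eps / 2 * L) by (apply Rmult_le_compat_r; lra). nra.
  - apply Rmult_lt_reg_r with L; auto. unfold Rdiv. rewrite Rmult_assoc, Rinv_l, Rmult_1_r by lra.
    assert (Rabs (ln clo) < eps * L).
    { assert (Rabs (ln clo) / eps < L).
      { eapply Rle_lt_trans; [|apply HL].
        assert (0 <= 2 * Rabs (ln CU) / eps) by (apply Rmult_le_pos; [pose proof (Rabs_pos (ln CU)); lra|left; apply Rinv_0_lt_compat; auto]).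
        assert (0 <= Rabs (ln clo) / eps) by (apply Rmult_le_pos; [pose proof (Rabs_pos (ln clo)); lra|left; apply Rinv_0_lt_compat; auto]).
        replace (2 * (Rabs (ln CU) + Rabs (ln clo)) / eps) with (2 * Rabs (ln CU) / eps + 2 * (Rabs (ln clo) / eps)) by (field; lra). lra. }
      apply Rmult_lt_compat_r with (r := eps) in H; auto. unfold Rdiv in H. rewrite Rmult_assoc, Rinv_l, Rmult_1_r in H by lra. lra. }
    pose proof (Rle_abs (- ln clo)). rewrite Rabs_Ropp in H0. nra.
Qed.

Lemma upper_P q s t eps : (2 <= q)%nat -> 0 < s < 2 -> 0 < eps ->
  exists CU eta, 0 < CU /\ 0 <= eta <= eps / 2 /\
  forall d n, 0 < d < 1 -> has_card (box_meets (Gr (fun x => Pdens q s x t)) d) n ->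
     INR n <= CU * Rpower (/ d) (Rmax s 1 + eta).
Proof.
  intros Hq Hs Heps. set (D := Rmax s 1).
  assert (HD : s <= D /\ 1 <= D /\ D < 2) by (unfold D; split; [apply Rmax_l|split; [apply Rmax_r|apply Rmax_lub_lt; lra]]).
  set (eta := Rmin (eps / 2) ((2 - D) / 2)).
  assert (Heta : 0 < eta <= eps / 2 /\ eta <= (2 - D) / 2).
  { unfold eta. split; [split|]; [apply Rmin_glb_lt; lra|apply Rmin_l|apply Rmin_r]. }
  set (th := 2 - D - eta).
  assert (Hth : 0 < th <= 1) by (unfold th; lra).
  assert (Hrho : rho q s th < 1) by (apply rho_lt1; auto; unfold th; lra).
  pose proof (HC_nonneg q s th Hq ltac:(lra) Hrho) as HHC.
  set (CU := (PI + 2) * (2 * HC q s th + 3)).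
  pose proof PI_RGT_0.
  exists CU, eta. split; [unfold CU; apply Rmult_lt_0_compat; lra|]. split; [lra|].
  intros d n Hd Hn.
  assert (Hid : 1 < / d) by (rewrite <- Rinv_1; apply Rinv_lt_contravar; lra).
  set (w := HC q s th * Rpower d th).
  assert (Hw : 0 <= w) by (unfold w; apply Rmult_le_pos; auto; left; apply Rpower_pos).
  assert (Hb := box_card_upper (fun x => Pdens q s x t) d w n ltac:(lra) Hw).
  assert (Hb2 : INR n <= (PI / d + 2) * (2 * w / d + 3)).
  { apply Hb; auto. intros x y _ _ Hxy. apply P_holder; auto; lra. }
  assert (A1 : PI / d + 2 <= (PI + 2) * / d) by (unfold Rdiv; nra).
  assert (E1 : w / d = HC q s th * Rpower (/ d) (1 - th)).
  { unfold w. rewrite Rpower_inv by lra. replace (- (1 - th)) with (th - 1) by ring.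
    assert (Rpower d th = Rpower d (th - 1) * d).
    { rewrite <- (Rpower_1 d) at 3 by lra. rewrite <- Rpower_plus. f_equal. ring. }
    rewrite H0. field. lra. }
  assert (G1 : 1 <= Rpower (/ d) (1 - th)) by (apply Rpower_ge1; lra).
  assert (A2 : 2 * w / d + 3 <= (2 * HC q s th + 3) * Rpower (/ d) (1 - th)).
  { replace (2 * w / d) with (2 * (w / d)) by (field; lra). rewrite E1. nra. }
  assert (E2 : Rpower (/ d) (D + eta) = / d * Rpower (/ d) (1 - th)).
  { rewrite <- (Rpower_1 (/ d)) at 2 by lra. rewrite <- Rpower_plus. f_equal. unfold th. ring. }
  fold D. rewrite E2. eapply Rle_trans; [apply Hb2|].
  replace (CU * (/ d * Rpower (/ d) (1 - th))) with (((PI + 2) * / d) * ((2 * HC q s th + 3) * Rpower (/ d) (1 - th))) by (unfold CU; ring).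
  apply Rmult_le_compat; auto.
  - apply Rplus_le_le_0_compat; [|lra]. unfold Rdiv. apply Rmult_le_pos; lra.
  - apply Rplus_le_le_0_compat; [|lra]. unfold Rdiv. apply Rmult_le_pos; [lra|]. left; apply Rinv_0_lt_compat; lra.
Qed.

Lemma lower_P q s t : (2 <= q)%nat -> 0 < s < 2 ->
  exists clo d1, 0 < clo /\ 0 < d1 /\ forall d n, 0 < d < d1 -> has_card (box_meets (Gr (fun x => Pdens q s x t)) d) n ->
    clo * Rpower (/ d) (Rmax s 1) <= INR n.
Proof.
  intros Hq Hs. destruct (Rle_dec s 1) as [Hs1|Hs1].
  - rewrite Rmax_right by lra. exists 1, 1. split; [lra|]. split; [lra|].
    intros d n Hd Hn. rewrite Rpower_1 by (apply Rinv_0_lt_compat; lra).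
    assert (Hth : rho q s ((2 - s) / 2) < 1) by (apply rho_lt1; auto; lra).
    assert (Hc : continuity (fun x => Pdens q s x t)) by (eapply P_cont; eauto; lra).
    destruct (chooseM d Hd) as [M [HM1 HM2]].
    destruct (box_card_lower _ d d n M Hc ltac:(lra) ltac:(lra) HM1 Hn) as [Hlow _].
    pose proof PI2_3_2.
    assert (1 <= (INR M + 1) * d) by nra.
    apply Rmult_le_reg_r with d; [lra|]. rewrite Rmult_1_l, Rinv_l by lra.
    assert ((INR M + 1) * d <= INR n * d) by (apply Rmult_le_compat_r; lra). lra.
  - rewrite Rmax_left by lra. apply lower_gt1; auto; lra.
Qed.

Theorem theorem1 (q : nat) (s : R) :
  (2 <= q)%nat -> 0 < s < 2 ->
  forall t : R, box_dim_is (graphP q s t) (Rmax s 1).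
Proof.
  intros Hq Hs t.
  change (graphP q s t) with (Gr (fun x => Pdens q s x t)).
  split.
  - intros d Hd. set (th := (2 - s) / 2).
    assert (Hrho : rho q s th < 1) by (apply rho_lt1; auto; unfold th; lra).
    apply (box_card_exists _ d (HC q s th * Rpower d th)); auto.
    + apply Rmult_le_pos; [apply HC_nonneg; auto; lra|left; apply Rpower_pos].
    + intros x y _ _ Hxy. apply P_holder; auto; unfold th; lra.
  - intros eps Heps.
    destruct (upper_P q s t eps Hq Hs Heps) as [CU [eta [HCU [Heta Hup]]]].
    destruct (lower_P q s t Hq Hs) as [clo [d1 [Hclo [Hd1 Hlo]]]].
    set (T := 2 * (Rabs (ln CU) + Rabs (ln clo)) / eps + 1).
    exists (Rmin (Rmin 1 d1) (exp (- T))). split.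
    { apply Rmin_glb_lt; [apply Rmin_glb_lt; lra|apply exp_pos]. }
    intros d n [Hd Hd0] Hn.
    assert (Ha : d < 1) by (eapply Rlt_le_trans; [apply Hd0|]; eapply Rle_trans; [apply Rmin_l|apply Rmin_l]).
    assert (Hb : d < d1) by (eapply Rlt_le_trans; [apply Hd0|]; eapply Rle_trans; [apply Rmin_l|apply Rmin_r]).
    assert (Hc : d < exp (- T)) by (eapply Rlt_le_trans; [apply Hd0|]; apply Rmin_r).
    apply (ratio_lemma _ eps eta clo CU d n); try lra; [apply Hlo; auto; lra|apply Hup; auto; lra|].
    { fold T. rewrite ln_Rinv by lra. assert (ln d < - T).
      { rewrite <- (ln_exp (- T)). apply ln_increasing; lra. }
      lra. }
Qed.
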